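(* Min-Makespan CMP can be solved in $\mathcal{O}(1)$ time for two robots.
   Context: Robots are axis-parallel unit squares in $\mathbb{R}^2$: a robot at position $p$ occupies $p+\boxdot$, $\boxdot=\{q:\|q\|_\infty\le 1/2\}$. Distances are measured in the $L_1$ norm $\|p\|=|x(p)|+|y(p)|$. A configuration of $k$ robots is a tuple $(p_1,\dots,p_k)$ with $\|p_i-p_j\|_\infty\ge 1$ for $i\ne j$; $\mathcal{F}_k$ is the set of configurations. A trajectory over $T=[t_0,t_1]$ is a $1$-Lipschitz (w.r.t. $L_1$) map $m:T\to\mathbb{R}^2$ whose image is a polygonal chain; a schedule is a tuple $M=(m_1,\dots,m_k)$ of trajectories over $T$, feasible if $M(t)\in\mathcal{F}_k$ for all $t\in T$; its makespan is $t_1-t_0$. Min-Makespan CMP: given $A,B\in\mathcal{F}_k$, find the minimum makespan of a feasible schedule from $A$ to $B$ (and such a schedule). *)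

(* Defs.v *)
From Stdlib Require Import Reals ZArith List.
Open Scope R_scope.

Definition pt : Type := (R * R)%type.
Definition padd (p q : pt) : pt := (fst p + fst q, snd p + snd q).
Definition psub (p q : pt) : pt := (fst p - fst q, snd p - snd q).
Definition pscale (l : R) (p : pt) : pt := (l * fst p, l * snd p).
Definition norm1 (p : pt) : R := Rabs (fst p) + Rabs (snd p).
(** L-infinity norm (used for the non-overlap condition of unit squares) *)
Definition norminf (p : pt) : R := Rmax (Rabs (fst p)) (Rabs (snd p)).

Definition is_config (k : nat) (P : nat -> pt) : Prop :=
  forall i j, (i < k)%nat -> (j < k)%nat -> i <> j ->
    norminf (psub (P i) (P j)) >= 1.

Definition on_segment (a b p : pt) : Prop :=
  exists l, 0 <= l <= 1 /\ p = padd a (pscale l (psub b a)).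

Fixpoint on_chain (q0 : pt) (qs : list pt) (p : pt) : Prop :=
  match qs with
  | nil => p = q0
  | q1 :: qs' => on_segment q0 q1 p \/ on_chain q1 qs' p
  end.

Definition trajectory (t0 t1 : R) (m : R -> pt) : Prop :=
  t0 <= t1 /\
  (forall s t, t0 <= s <= t1 -> t0 <= t <= t1 ->
      norm1 (psub (m s) (m t)) <= Rabs (s - t)) /\
  (exists q0 qs, forall p,
      (exists t, t0 <= t <= t1 /\ m t = p) <-> on_chain q0 qs p).

Definition schedule (k : nat) (t0 t1 : R) (M : nat -> R -> pt) : Prop :=
  t0 <= t1 /\ forall i, (i < k)%nat -> trajectory t0 t1 (M i).

Definition feasible (k : nat) (t0 t1 : R) (M : nat -> R -> pt) : Prop :=
  schedule k t0 t1 M /\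
  forall t, t0 <= t <= t1 -> is_config k (fun i => M i t).

Definition feasible_from_to (k : nat) (A B : nat -> pt) (t0 t1 : R)
    (M : nat -> R -> pt) : Prop :=
  feasible k t0 t1 M /\
  forall i, (i < k)%nat -> M i t0 = A i /\ M i t1 = B i.

(** * Constant-time algorithms (real-RAM straight-line programs with
      branching): a fixed finite arithmetic expression over the input reals,
      built from the inputs, integer constants, +, -, *, / and
      comparison-based branching.  Since the expression is fixed (independent
      of the input), evaluating it takes O(1) operations. *)
Inductive rterm : Type :=
  | TVar : nat -> rterm
  | TCst : Z -> rterm
  | TAdd : rterm -> rterm -> rterm
  | TSub : rterm -> rterm -> rterm
  | TMul : rterm -> rterm -> rterm
  | TDiv : rterm -> rterm -> rterm
  | TIte : rterm -> rterm -> rterm -> rterm -> rterm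
      .

Fixpoint reval (env : nat -> R) (t : rterm) : R :=
  match t with
  | TVar n => env n
  | TCst z => IZR z
  | TAdd a b => reval env a + reval env b
  | TSub a b => reval env a - reval env b
  | TMul a b => reval env a * reval env b
  | TDiv a b => reval env a / reval env b
  | TIte a b u v =>
      if Rle_dec (reval env a) (reval env b) then reval env u else reval env v
  end.

Definition input2 (A B : nat -> pt) : nat -> R :=
  fun n => match n with
           | 0 => fst (A 0%nat) | 1 => snd (A 0%nat)
           | 2 => fst (A 1%nat) | 3 => snd (A 1%nat)
           | 4 => fst (B 0%nat) | 5 => snd (B 0%nat)
           | 6 => fst (B 1%nat) | 7 => snd (B 1%nat)
           | _ => 0
           end.

Definition follows_pl (k K : nat) (tau : nat -> R) (P : nat -> nat -> pt)
    (M : nat -> R -> pt) : Prop :=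
  (forall j, (j < K)%nat -> tau j <= tau (S j)) /\
  (forall i j, (i < k)%nat -> (j <= K)%nat -> M i (tau j) = P i j) /\
  (forall i j t, (i < k)%nat -> (j < K)%nat -> tau j < tau (S j) ->
      tau j <= t <= tau (S j) ->
      M i t = padd (P i j)
                (pscale ((t - tau j) / (tau (S j) - tau j))
                        (psub (P i (S j)) (P i j)))).

(* Main.v *)
Require Import Defs.
From Stdlib Require Import Reals ZArith List Lra Lia Classical.
Open Scope R_scope.

Lemma Rabs_cases x : (0 <= x /\ Rabs x = x) \/ (x < 0 /\ Rabs x = - x).
Proof. destruct (Rle_lt_dec 0 x); [left; split; [lra| apply Rabs_right; lra] | right; split; [lra | apply Rabs_left; lra]]. Qed.
Lemma Rmax_cases a b : (a <= b /\ Rmax a b = b) \/ (b < a /\ Rmax a b = a).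
Proof. unfold Rmax; destruct (Rle_dec a b); [left|right]; split; auto; lra. Qed.
Lemma Rmin_cases a b : (a <= b /\ Rmin a b = a) \/ (b < a /\ Rmin a b = b).
Proof. unfold Rmin; destruct (Rle_dec a b); [left|right]; split; auto; lra. Qed.
Ltac elimR := repeat match goal with
  | |- context [if Rle_dec ?a ?b then _ else _] => destruct (Rle_dec a b); try (exfalso; lra)
  | H : context [if Rle_dec ?a ?b then _ else _] |- _ => destruct (Rle_dec a b); try (exfalso; lra)
  | |- context [Rmax ?a ?b] => let E := fresh in destruct (Rmax_cases a b) as [[? E]|[? E]]; rewrite E in *; clear E; try (exfalso; lra)
  | H : context [Rmax ?a ?b] |- _ => let E := fresh in destruct (Rmax_cases a b) as [[? E]|[? E]]; rewrite E in *; clear E; try (exfalso; lra)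
  | |- context [Rmin ?a ?b] => let E := fresh in destruct (Rmin_cases a b) as [[? E]|[? E]]; rewrite E in *; clear E; try (exfalso; lra)
  | H : context [Rmin ?a ?b] |- _ => let E := fresh in destruct (Rmin_cases a b) as [[? E]|[? E]]; rewrite E in *; clear E; try (exfalso; lra)
  | |- context [Rabs ?x] => let E := fresh in destruct (Rabs_cases x) as [[? E]|[? E]]; rewrite E in *; clear E; try (exfalso; lra)
  | H : context [Rabs ?x] |- _ => let E := fresh in destruct (Rabs_cases x) as [[? E]|[? E]]; rewrite E in *; clear E; try (exfalso; lra)
  end.

(** * Piecewise-linear trajectories *)
Definition seg (z0 z1 : pt) (ta tb t : R) : pt :=
  padd z0 (pscale ((t - ta) / (tb - ta)) (psub z1 z0)).
Definition pl3 (z0 z1 z2 z3 : pt) (t1 t2 t3 t : R) : pt :=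
  if Rle_dec t t1 then seg z0 z1 0 t1 t
  else if Rle_dec t t2 then seg z1 z2 t1 t2 t else seg z2 z3 t2 t3 t.

Lemma lam_range ta tb t : ta <= t <= tb -> 0 <= (t - ta) / (tb - ta) <= 1.
Proof.
  intros [H1 H2]. destruct (Req_dec ta tb) as [E|E].
  - subst. replace (t - tb) with 0 by lra. unfold Rdiv. rewrite Rmult_0_l. lra.
  - split.
    + unfold Rdiv. apply Rmult_le_pos; [lra|]. left. apply Rinv_0_lt_compat. lra.
    + apply (Rmult_le_reg_r (tb - ta)); [lra|]. unfold Rdiv. rewrite Rmult_assoc, Rinv_l by lra. lra.
Qed.

Lemma norm1_sym a b : norm1 (psub a b) = norm1 (psub b a).
Proof. destruct a, b; unfold norm1, psub; simpl. rewrite (Rabs_minus_sym r r1), (Rabs_minus_sym r0 r2). reflexivity. Qed.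
Lemma norm1_triang a b c : norm1 (psub a c) <= norm1 (psub a b) + norm1 (psub b c).
Proof.
  destruct a, b, c; unfold norm1, psub; simpl.
  pose proof (Rabs_triang (r - r1) (r1 - r3)). pose proof (Rabs_triang (r0 - r2) (r2 - r4)).
  replace (r - r3) with ((r - r1) + (r1 - r3)) by ring. replace (r0 - r4) with ((r0 - r2) + (r2 - r4)) by ring. lra.
Qed.
Lemma norm1_ge0 a : 0 <= norm1 a.
Proof. destruct a; unfold norm1; simpl. pose proof (Rabs_pos r); pose proof (Rabs_pos r0); lra. Qed.
Lemma norm1_zero a b : norm1 (psub a b) <= 0 -> a = b.
Proof.
  destruct a, b; unfold norm1, psub; simpl. intros. elimR. f_equal; lra.
Qed.

Lemma seg_diff z0 z1 ta tb s t :
  psub (seg z0 z1 ta tb s) (seg z0 z1 ta tb t) = pscale ((s - ta)/(tb - ta) - (t - ta)/(tb - ta)) (psub z1 z0).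
Proof. destruct z0, z1; unfold seg, padd, pscale, psub; simpl. f_equal; ring. Qed.
Lemma norm1_scale l a : norm1 (pscale l a) = Rabs l * norm1 a.
Proof. destruct a; unfold norm1, pscale; simpl. rewrite !Rabs_mult. ring. Qed.

Lemma seg_lip z0 z1 ta tb s t : ta <= s <= tb -> ta <= t <= tb ->
  norm1 (psub z1 z0) <= tb - ta ->
  norm1 (psub (seg z0 z1 ta tb s) (seg z0 z1 ta tb t)) <= Rabs (s - t).
Proof.
  intros Hs Ht HN. rewrite seg_diff, norm1_scale.
  destruct (Req_dec ta tb) as [E|E].
  - subst. replace (norm1 (psub z1 z0)) with 0. rewrite Rmult_0_r. apply Rabs_pos.
    pose proof (norm1_ge0 (psub z1 z0)). lra.
  - replace ((s - ta) / (tb - ta) - (t - ta) / (tb - ta)) with ((s - t) / (tb - ta)) by (field; lra).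
    unfold Rdiv. rewrite Rabs_mult. rewrite (Rabs_right (/ (tb - ta))) by (left; apply Rinv_0_lt_compat; lra).
    rewrite Rmult_assoc. pose proof (Rabs_pos (s - t)).
    assert (/ (tb - ta) * norm1 (psub z1 z0) <= 1).
    { apply (Rmult_le_reg_l (tb - ta)); [lra|]. rewrite <- Rmult_assoc, Rinv_r by lra. lra. }
    pose proof (norm1_ge0 (psub z1 z0)).
    assert (0 <= / (tb - ta) * norm1 (psub z1 z0)) by (apply Rmult_le_pos; [left; apply Rinv_0_lt_compat; lra| lra]).
    nra.
Qed.

Lemma seg_start z0 z1 ta tb : seg z0 z1 ta tb ta = z0.
Proof. destruct z0, z1; unfold seg, padd, pscale, psub; simpl. replace (ta - ta) with 0 by ring.
  unfold Rdiv. rewrite !Rmult_0_l. f_equal; ring. Qed.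
Lemma seg_end z0 z1 ta tb : ta <= tb -> norm1 (psub z1 z0) <= tb - ta -> seg z0 z1 ta tb tb = z1.
Proof.
  intros H HN. destruct (Req_dec ta tb) as [E|E].
  - subst. rewrite seg_start. symmetry; apply norm1_zero. lra.
  - destruct z0, z1; unfold seg, padd, pscale, psub; simpl.
    replace ((tb - ta) / (tb - ta)) with 1 by (field; lra). f_equal; ring.
Qed.

Section PL.
Variables (z0 z1 z2 z3 : pt) (t1 t2 t3 : R).
Hypothesis (H1 : 0 <= t1) (H12 : t1 <= t2) (H23 : t2 <= t3).
Hypothesis (N0 : norm1 (psub z1 z0) <= t1 - 0) (N1 : norm1 (psub z2 z1) <= t2 - t1)
  (N2 : norm1 (psub z3 z2) <= t3 - t2).
Local Notation m := (pl3 z0 z1 z2 z3 t1 t2 t3).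

Lemma pl_in0 t : t <= t1 -> m t = seg z0 z1 0 t1 t.
Proof. intros. unfold pl3. destruct (Rle_dec t t1); [reflexivity| lra]. Qed.
Lemma pl_in1 t : t1 <= t <= t2 -> m t = seg z1 z2 t1 t2 t.
Proof.
  intros. unfold pl3. destruct (Rle_dec t t1).
  - assert (t = t1) by lra. subst. rewrite seg_end by lra. rewrite seg_start. reflexivity.
  - destruct (Rle_dec t t2); [reflexivity| lra].
Qed.
Lemma pl_in2 t : t2 <= t -> m t = seg z2 z3 t2 t3 t.
Proof.
  intros. unfold pl3. destruct (Rle_dec t t1).
  - assert (t = t1 /\ t1 = t2) by lra. destruct H0; subst.
    rewrite seg_end by lra. rewrite seg_start. symmetry. apply norm1_zero. lra.
  - destruct (Rle_dec t t2).
    + assert (t = t2) by lra. subst. rewrite seg_end by lra. rewrite seg_start. reflexivity.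
    + reflexivity.
Qed.
Lemma pl_at0 : m 0 = z0. Proof. rewrite pl_in0 by lra. apply seg_start. Qed.
Lemma pl_at1 : m t1 = z1. Proof. rewrite pl_in1 by lra. apply seg_start. Qed.
Lemma pl_at2 : m t2 = z2. Proof. rewrite pl_in2 by lra. apply seg_start. Qed.
Lemma pl_at3 : m t3 = z3. Proof. rewrite pl_in2 by lra. apply seg_end; lra. Qed.

Lemma d0a t : 0 <= t <= t1 -> norm1 (psub (m t) z0) <= t - 0.
Proof. intros. rewrite pl_in0 by lra. rewrite <- (seg_start z0 z1 0 t1) at 2.
  eapply Rle_trans; [apply seg_lip; lra|]. rewrite Rabs_right; lra. Qed.
Lemma d0b t : 0 <= t <= t1 -> norm1 (psub z1 (m t)) <= t1 - t.
Proof. intros. rewrite pl_in0 by lra. rewrite <- (seg_end z0 z1 0 t1) at 1 by lra.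
  eapply Rle_trans; [apply seg_lip; lra|]. rewrite Rabs_right; lra. Qed.
Lemma d1a t : t1 <= t <= t2 -> norm1 (psub (m t) z1) <= t - t1.
Proof. intros. rewrite pl_in1 by lra. rewrite <- (seg_start z1 z2 t1 t2) at 2.
  eapply Rle_trans; [apply seg_lip; lra|]. rewrite Rabs_right; lra. Qed.
Lemma d1b t : t1 <= t <= t2 -> norm1 (psub z2 (m t)) <= t2 - t.
Proof. intros. rewrite pl_in1 by lra. rewrite <- (seg_end z1 z2 t1 t2) at 1 by lra.
  eapply Rle_trans; [apply seg_lip; lra|]. rewrite Rabs_right; lra. Qed.
Lemma d2a t : t2 <= t <= t3 -> norm1 (psub (m t) z2) <= t - t2.
Proof. intros. rewrite pl_in2 by lra. rewrite <- (seg_start z2 z3 t2 t3) at 2.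
  eapply Rle_trans; [apply seg_lip; lra|]. rewrite Rabs_right; lra. Qed.
Lemma d2b t : t2 <= t <= t3 -> norm1 (psub z3 (m t)) <= t3 - t.
Proof. intros. rewrite pl_in2 by lra. rewrite <- (seg_end z2 z3 t2 t3) at 1 by lra.
  eapply Rle_trans; [apply seg_lip; lra|]. rewrite Rabs_right; lra. Qed.

Lemma pl_lip_le s t : 0 <= s -> s <= t -> t <= t3 -> norm1 (psub (m s) (m t)) <= t - s.
Proof.
  intros Hs Hst Ht.
  destruct (Rle_dec s t1) as [S1|S1]; [|destruct (Rle_dec s t2) as [S2|S2]];
  (destruct (Rle_dec t t1) as [T1|T1]; [|destruct (Rle_dec t t2) as [T2|T2]]).
  - rewrite !pl_in0 by lra. eapply Rle_trans; [apply seg_lip; lra|]. rewrite Rabs_left1; lra.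
  - pose proof (norm1_triang (m s) z1 (m t)) as H.
    pose proof (d0b s ltac:(lra)) as A. pose proof (d1a t ltac:(lra)) as B.
    rewrite norm1_sym in A, B. lra.
  - pose proof (norm1_triang (m s) z1 (m t)) as H. pose proof (norm1_triang z1 z2 (m t)) as H0.
    pose proof (d0b s ltac:(lra)) as A. pose proof (d2a t ltac:(lra)) as B.
    pose proof N1 as C. rewrite norm1_sym in A, B, C. lra.
  - lra.
  - rewrite !pl_in1 by lra. eapply Rle_trans; [apply seg_lip; lra|]. rewrite Rabs_left1; lra.
  - pose proof (norm1_triang (m s) z2 (m t)) as H.
    pose proof (d1b s ltac:(lra)) as A. pose proof (d2a t ltac:(lra)) as B.
    rewrite norm1_sym in A, B. lra.
  - lra.
  - lra.
  - rewrite !pl_in2 by lra. eapply Rle_trans; [apply seg_lip; lra|]. rewrite Rabs_left1; lra.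
Qed.

Lemma pl_lip s t : 0 <= s <= t3 -> 0 <= t <= t3 -> norm1 (psub (m s) (m t)) <= Rabs (s - t).
Proof.
  intros Hs Ht. destruct (Rle_dec s t).
  - rewrite Rabs_left1 by lra. pose proof (pl_lip_le s t). lra.
  - rewrite norm1_sym, Rabs_right by lra. apply pl_lip_le; lra.
Qed.

Lemma seg_on z0' z1' ta tb t : ta <= t <= tb -> on_segment z0' z1' (seg z0' z1' ta tb t).
Proof. intros. exists ((t - ta) / (tb - ta)). split; [apply lam_range; lra | reflexivity]. Qed.

Lemma seg_onto z0' z1' ta tb p : ta <= tb -> norm1 (psub z1' z0') <= tb - ta ->
  on_segment z0' z1' p -> exists t, ta <= t <= tb /\ seg z0' z1' ta tb t = p.
Proof.
  intros H HN [l [Hl ->]]. destruct (Req_dec ta tb) as [E|E].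
  - subst. exists tb. split; [lra|]. rewrite seg_start.
    assert (z1' = z0') by (apply norm1_zero; lra). subst.
    destruct z0'; unfold padd, pscale, psub; simpl. f_equal; ring.
  - exists (ta + l * (tb - ta)). split; [nra|].
    unfold seg. f_equal. f_equal. field. lra.
Qed.

Lemma pl_traj : trajectory 0 t3 m.
Proof.
  split; [lra|]. split.
  - intros s t Hs Ht. apply pl_lip; lra.
  - exists z0, (z1 :: z2 :: z3 :: nil). intros p. split.
    + intros [t [Ht <-]]. simpl.
      destruct (Rle_dec t t1); [|destruct (Rle_dec t t2)].
      * left. rewrite pl_in0 by lra. apply seg_on; lra.
      * right; left. rewrite pl_in1 by lra. apply seg_on; lra.
      * right; right; left. rewrite pl_in2 by lra. apply seg_on; lra.
    + simpl. intros [Hp|[Hp|[Hp|Hp]]].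
      * destruct (seg_onto _ _ 0 t1 p H1 N0 Hp) as [t [Ht <-]]. exists t. split; [lra|]. apply pl_in0; lra.
      * destruct (seg_onto _ _ t1 t2 p H12 N1 Hp) as [t [Ht <-]]. exists t. split; [lra|]. apply pl_in1; lra.
      * destruct (seg_onto _ _ t2 t3 p H23 N2 Hp) as [t [Ht <-]]. exists t. split; [lra|]. apply pl_in2; lra.
      * exists t3. split; [lra|]. rewrite Hp. apply pl_at3.
Qed.
End PL.

Record Ops := { car : Type; oadd : car -> car -> car; osub : car -> car -> car;
  omul : car -> car -> car; odiv : car -> car -> car; ocst : Z -> car;
  oite : car -> car -> car -> car -> car }.

Definition Rops : Ops := {| car := R; oadd := Rplus; osub := Rminus; omul := Rmult;
  odiv := Rdiv; ocst := IZR; oite := fun a b u v => if Rle_dec a b then u else v |}.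
Definition Tops : Ops := {| car := rterm; oadd := TAdd; osub := TSub; omul := TMul;
  odiv := TDiv; ocst := TCst; oite := TIte |}.

Section Gen.
Variable O : Ops.
Local Notation C := (car O).
Local Notation "a +' b" := (oadd O a b) (at level 50, left associativity).
Local Notation "a -' b" := (osub O a b) (at level 50, left associativity).
Local Notation "a *' b" := (omul O a b) (at level 40, left associativity).
Local Notation "a /' b" := (odiv O a b) (at level 40, left associativity).
Local Notation "# z" := (ocst O z) (at level 0).
Definition gneg (x : C) := #0 -' x.
Definition gabs (x : C) := oite O #0 x x (gneg x).
Definition gmax (a b : C) := oite O a b b a.
Definition gmin (a b : C) := oite O a b a b.
Definition ghalf (x : C) := x /' #2.
Definition gninf (a b : C) := gmax (gabs a) (gabs b).
Definition gG (pu pv w1u w1v w2u w2v qu qv su sv : C) : C :=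
  ghalf (gmax (gmax (gabs (w1u -' pu) +' gabs (w2u -' w1u) +' gabs (qu -' w2u) +' su)
                    (gabs (w1v -' pv) +' gabs (w2v -' w1v) +' gabs (qv -' w2v) +' sv))
              (gninf (w1u -' pu) (w1v -' pv) +' gninf (w2u -' w1u) (w2v -' w1v)
                 +' gninf (qu -' w2u) (qv -' w2v))).
Definition gclamp (x lo hi : C) := gmax lo (gmin x hi).
Definition gbetaN (pu pv qu qv : C) : C :=
  gclamp (oite O pv qv (ghalf (pu +' qu +' pv +' qv)) (ghalf (pv +' qv -' pu -' qu)))
         (gmax (gmin pv qv) #2) (gmax (gmax pv qv) #2).
Definition gcNW (pu pv qu qv : C) : C := gmax #2 (gmin (pv -' pu) (qv -' qu)).
Definition gaNW (pu pv qu qv : C) : C := gmin (gcNW pu pv qu qv) (gmax (gneg qu) #2).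
Definition gbNW (pu pv qu qv : C) : C := gmin (gcNW pu pv qu qv) (gmax pv #2).
Definition gite4 (a b : C) (x y : C*C*C*C) : C*C*C*C :=
  match x, y with (x1,x2,x3,x4), (y1,y2,y3,y4) =>
    (oite O a b x1 y1, oite O a b x2 y2, oite O a b x3 y3, oite O a b x4 y4) end.
Definition gwcan (pu pv qu qv su sv : C) : C*C*C*C :=
  gite4 #0 qu
    (gite4 #0 qv (pu,pv,pu,pv) (let b := gbetaN pv pu qv qu in (b, #0, b, #0)))
    (gite4 #0 qv (let b := gbetaN pu pv qu qv in (#0, b, #0, b))
       (let an := gaNW pu pv qu qv in let bn := gbNW pu pv qu qv in
        let ae := gaNW pv pu qv qu in let be := gbNW pv pu qv qu in
        gite4 (gG pu pv #0 bn (gneg an) #0 qu qv su sv) (gG pu pv be #0 #0 (gneg ae) qu qv su sv)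
          (#0, bn, gneg an, #0) (be, #0, #0, gneg ae))).
Definition gsgn (x : C) := oite O #0 x #1 #(-1).
Definition gW (pu pv qu qv su sv : C) : C*C*C*C :=
  let eu := gsgn pu in let ev := gsgn pv in
  match gwcan (eu *' pu) (ev *' pv) (eu *' qu) (ev *' qv) su sv with
  (a1,a2,a3,a4) => (eu *' a1, ev *' a2, eu *' a3, ev *' a4) end.
Definition gU (x y : C) := x +' y.
Definition gV (x y : C) := x -' y.
Record inp := { x1 : C; y1 : C; x2 : C; y2 : C; X1 : C; Y1 : C; X2 : C; Y2 : C }.
Definition ipu (i : inp) := gU (x2 i) (y2 i) -' gU (x1 i) (y1 i).
Definition ipv (i : inp) := gV (x2 i) (y2 i) -' gV (x1 i) (y1 i).
Definition iqu (i : inp) := gU (X2 i) (Y2 i) -' gU (X1 i) (Y1 i).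
Definition iqv (i : inp) := gV (X2 i) (Y2 i) -' gV (X1 i) (Y1 i).
Definition iSu (i : inp) := (gU (X1 i) (Y1 i) +' gU (X2 i) (Y2 i)) -' (gU (x1 i) (y1 i) +' gU (x2 i) (y2 i)).
Definition iSv (i : inp) := (gV (X1 i) (Y1 i) +' gV (X2 i) (Y2 i)) -' (gV (x1 i) (y1 i) +' gV (x2 i) (y2 i)).
Definition iW (i : inp) := gW (ipu i) (ipv i) (iqu i) (iqv i) (gabs (iSu i)) (gabs (iSv i)).
Definition iT (i : inp) : C :=
  match iW i with (a1,a2,a3,a4) =>
    gG (ipu i) (ipv i) a1 a2 a3 a4 (iqu i) (iqv i) (gabs (iSu i)) (gabs (iSv i)) end.
End Gen.

Definition Tinp : inp Tops := Build_inp Tops (TVar 0) (TVar 1) (TVar 2) (TVar 3) (TVar 4) (TVar 5) (TVar 6) (TVar 7).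
Definition Rinp (env : nat -> R) : inp Rops := Build_inp Rops (env 0%nat) (env 1%nat) (env 2%nat) (env 3%nat) (env 4%nat) (env 5%nat) (env 6%nat) (env 7%nat).


Section RV.
Variable env : nat -> R.
Local Notation rv := (reval env).
Definition rv4 (t : rterm*rterm*rterm*rterm) : R*R*R*R :=
  match t with (a,b,c,d) => (rv a, rv b, rv c, rv d) end.
Lemma rv_neg e : rv (gneg Tops e) = gneg Rops (rv e). Proof. reflexivity. Qed.
Lemma rv_abs e : rv (gabs Tops e) = gabs Rops (rv e). Proof. reflexivity. Qed.
Lemma rv_max a b : rv (gmax Tops a b) = gmax Rops (rv a) (rv b). Proof. reflexivity. Qed.
Lemma rv_min a b : rv (gmin Tops a b) = gmin Rops (rv a) (rv b). Proof. reflexivity. Qed.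
Lemma rv_half a : rv (ghalf Tops a) = ghalf Rops (rv a). Proof. reflexivity. Qed.
Lemma rv_ninf a b : rv (gninf Tops a b) = gninf Rops (rv a) (rv b). Proof. reflexivity. Qed.
Lemma rv_G a b c d e f g h i j : rv (gG Tops a b c d e f g h i j) =
  gG Rops (rv a) (rv b) (rv c) (rv d) (rv e) (rv f) (rv g) (rv h) (rv i) (rv j).
Proof. reflexivity. Qed.
Lemma rv_betaN a b c d : rv (gbetaN Tops a b c d) = gbetaN Rops (rv a) (rv b) (rv c) (rv d).
Proof. reflexivity. Qed.
Lemma rv_aNW a b c d : rv (gaNW Tops a b c d) = gaNW Rops (rv a) (rv b) (rv c) (rv d).
Proof. reflexivity. Qed.
Lemma rv_bNW a b c d : rv (gbNW Tops a b c d) = gbNW Rops (rv a) (rv b) (rv c) (rv d).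
Proof. reflexivity. Qed.
Lemma rv_ite4 a b x y : rv4 (gite4 Tops a b x y) = gite4 Rops (rv a) (rv b) (rv4 x) (rv4 y).
Proof. destruct x as [[[? ?] ?] ?]; destruct y as [[[? ?] ?] ?]; reflexivity. Qed.
Lemma rv_wcan a b c d e f : rv4 (gwcan Tops a b c d e f) =
  gwcan Rops (rv a) (rv b) (rv c) (rv d) (rv e) (rv f).
Proof.
  unfold gwcan. rewrite !rv_ite4. cbv zeta. cbn [rv4].
  rewrite !rv_betaN, !rv_G, !rv_neg, !rv_aNW, !rv_bNW. reflexivity.
Qed.
Lemma rv_W a b c d e f : rv4 (gW Tops a b c d e f) = gW Rops (rv a) (rv b) (rv c) (rv d) (rv e) (rv f).
Proof.
  unfold gW. cbv zeta.
  pose proof (rv_wcan (omul Tops (gsgn Tops a) a) (omul Tops (gsgn Tops b) b)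
     (omul Tops (gsgn Tops a) c) (omul Tops (gsgn Tops b) d) e f) as H.
  change (rv (omul Tops (gsgn Tops a) a)) with (omul Rops (gsgn Rops (rv a)) (rv a)) in H.
  change (rv (omul Tops (gsgn Tops b) b)) with (omul Rops (gsgn Rops (rv b)) (rv b)) in H.
  change (rv (omul Tops (gsgn Tops a) c)) with (omul Rops (gsgn Rops (rv a)) (rv c)) in H.
  change (rv (omul Tops (gsgn Tops b) d)) with (omul Rops (gsgn Rops (rv b)) (rv d)) in H.
  rewrite <- H.
  destruct (gwcan Tops _ _ _ _ _ _) as [[[? ?] ?] ?]. reflexivity.
Qed.
End RV.


Section Gen2.
Variable O : Ops.
Local Notation C := (car O).
Local Notation "a +' b" := (oadd O a b) (at level 50, left associativity).
Local Notation "a -' b" := (osub O a b) (at level 50, left associativity).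
Local Notation "a *' b" := (omul O a b) (at level 40, left associativity).
Local Notation "a /' b" := (odiv O a b) (at level 40, left associativity).
Local Notation "# z" := (ocst O z) (at level 0).
Definition gl (au av bu bv : C) := gninf O (bu -' au) (bv -' av).
Definition gsl (pu pv w1u w1v w2u w2v qu qv T : C) :=
  (T -' ghalf O (gl pu pv w1u w1v +' gl w1u w1v w2u w2v +' gl w2u w2v qu qv)) /' #3.
Definition gd0 (pu pv w1u w1v w2u w2v qu qv T : C) :=
  ghalf O (gl pu pv w1u w1v) +' gsl pu pv w1u w1v w2u w2v qu qv T.
Definition gd1 (pu pv w1u w1v w2u w2v qu qv T : C) :=
  ghalf O (gl w1u w1v w2u w2v) +' gsl pu pv w1u w1v w2u w2v qu qv T.
Definition gtv3 (p w1 w2 q : C) := gabs O (w1 -' p) +' gabs O (w2 -' w1) +' gabs O (q -' w2).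
Definition gdel (Sg T tv dur dd : C) := Sg *' (#2 *' dur -' gabs O dd) /' (#2 *' T -' tv).
Definition gx0 (Su Sv du dv : C) := ghalf O (ghalf O (Su -' du) +' ghalf O (Sv -' dv)).
Definition gy0 (Su Sv du dv : C) := ghalf O (ghalf O (Su -' du) -' ghalf O (Sv -' dv)).
Definition gx1 (Su Sv du dv : C) := ghalf O (ghalf O (Su +' du) +' ghalf O (Sv +' dv)).
Definition gy1 (Su Sv du dv : C) := ghalf O (ghalf O (Su +' du) -' ghalf O (Sv +' dv)).

Definition gsched (pu pv w1u w1v w2u w2v qu qv Sgu Sgv S0u S0v : C) (n : nat) : C :=
  let su := gabs O Sgu in let sv := gabs O Sgv in
  let T := gG O pu pv w1u w1v w2u w2v qu qv su sv in
  let d0 := gd0 pu pv w1u w1v w2u w2v qu qv T in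
  let d1 := gd1 pu pv w1u w1v w2u w2v qu qv T in
  let tvu := gtv3 pu w1u w2u qu in let tvv := gtv3 pv w1v w2v qv in
  let S1u := S0u +' gdel Sgu T tvu d0 (w1u -' pu) in
  let S1v := S0v +' gdel Sgv T tvv d0 (w1v -' pv) in
  let S2u := S1u +' gdel Sgu T tvu d1 (w2u -' w1u) in
  let S2v := S1v +' gdel Sgv T tvv d1 (w2v -' w1v) in
  match n with
  | 0 => T | 1 => d0 | 2 => d0 +' d1
  | 3 => gx0 S1u S1v w1u w1v | 4 => gy0 S1u S1v w1u w1v
  | 5 => gx1 S1u S1v w1u w1v | 6 => gy1 S1u S1v w1u w1v
  | 7 => gx0 S2u S2v w2u w2v | 8 => gy0 S2u S2v w2u w2v
  | 9 => gx1 S2u S2v w2u w2v | _ => gy1 S2u S2v w2u w2v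
  end%nat.

Definition gout (i : inp O) (n : nat) : C :=
  let pu := ipu O i in let pv := ipv O i in let qu := iqu O i in let qv := iqv O i in
  let Sgu := iSu O i in let Sgv := iSv O i in
  match gW O pu pv qu qv (gabs O Sgu) (gabs O Sgv) with
  | (w1u, w1v, w2u, w2v) =>
    gsched pu pv w1u w1v w2u w2v qu qv Sgu Sgv
      (gU O (x1 O i) (y1 O i) +' gU O (x2 O i) (y2 O i)) (gV O (x1 O i) (y1 O i) +' gV O (x2 O i) (y2 O i)) n
  end.
End Gen2.

Lemma rv_sched env a b c d e f g h i j k l n :
  reval env (gsched Tops a b c d e f g h i j k l n) =
  gsched Rops (reval env a) (reval env b) (reval env c) (reval env d) (reval env e) (reval env f)
    (reval env g) (reval env h) (reval env i) (reval env j) (reval env k) (reval env l) n.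
Proof.
  destruct n as [|[|[|[|[|[|[|[|[|[|n]]]]]]]]]]; reflexivity.
Qed.

Lemma reval_out env n : reval env (gout Tops Tinp n) = gout Rops (Rinp env) n.
Proof.
  unfold gout.
  pose proof (rv_W env (ipu Tops Tinp) (ipv Tops Tinp) (iqu Tops Tinp) (iqv Tops Tinp)
     (gabs Tops (iSu Tops Tinp)) (gabs Tops (iSv Tops Tinp))) as H.
  assert (E : gW Rops (ipu Rops (Rinp env)) (ipv Rops (Rinp env)) (iqu Rops (Rinp env)) (iqv Rops (Rinp env))
     (gabs Rops (iSu Rops (Rinp env))) (gabs Rops (iSv Rops (Rinp env))) =
     gW Rops (reval env (ipu Tops Tinp)) (reval env (ipv Tops Tinp)) (reval env (iqu Tops Tinp)) (reval env (iqv Tops Tinp))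
     (reval env (gabs Tops (iSu Tops Tinp))) (reval env (gabs Tops (iSv Tops Tinp)))) by reflexivity.
  rewrite E, <- H.
  destruct (gW Tops _ _ _ _ _ _) as [[[? ?] ?] ?]. cbn [rv4].
  rewrite rv_sched. reflexivity.
Qed.

Definition Lip (K : R) (f : R -> R) (a b : R) : Prop :=
  forall s t, a <= s <= b -> a <= t <= b -> Rabs (f s - f t) <= K * Rabs (s - t).

Lemma lip_lower K g a b s t : Lip K g a b -> a <= s <= b -> a <= t <= b -> g s - K * Rabs (s - t) <= g t.
Proof. intros HL Hs Ht. specialize (HL s t Hs Ht). elimR; lra. Qed.

Lemma first_time K g a b : 0 <= K -> Lip K g a b -> a <= b -> 0 < g a -> g b <= 0 ->
  exists r, a < r <= b /\ g r = 0 /\ forall t, a <= t < r -> 0 < g t.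
Proof.
  intros HK HL Hab Ha Hb.
  set (E := fun x => a <= x <= b /\ forall t, a <= t <= x -> 0 < g t).
  assert (HE : bound E) by (exists b; intros x [Hx _]; lra).
  assert (Ea : E a) by (split; [lra| intros t Ht; replace t with a by lra; auto]).
  destruct (completeness E HE (ex_intro _ a Ea)) as [r [Hub Hlub]].
  assert (Har : a <= r) by (apply Hub; auto).
  assert (Hrb : r <= b) by (apply Hlub; intros x [Hx _]; lra).
  assert (Hbelow : forall t, a <= t < r -> 0 < g t).
  { intros t Ht. destruct (classic (exists x, E x /\ t < x)) as [[x [[Hx1 Hx2] Htx]]|Hn].
    - apply Hx2; lra.
    - exfalso. assert (r <= t); [|lra]. apply Hlub. intros x Ex.
      destruct (Rle_lt_dec x t); auto. exfalso; apply Hn; exists x; auto. }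
  assert (Hle : g r <= 0).
  { destruct (Rle_lt_dec (g r) 0) as [|Hgt]; auto. exfalso.
    assert (Hrb' : r < b) by (destruct (Req_dec r b); [subst; lra| lra]).
    set (d := Rmin (b - r) (g r / (2 * (K + 1)))).
    assert (Hd : 0 < d) by (unfold d; apply Rmin_glb_lt; [lra| apply Rdiv_lt_0_compat; lra]).
    assert (Hd1 : d <= b - r) by apply Rmin_l.
    assert (Hd2 : d <= g r / (2 * (K + 1))) by apply Rmin_r.
    assert (HKd : K * d < g r).
    { apply Rle_lt_trans with ((K+1) * d); [nra|].
      apply Rle_lt_trans with ((K+1) * (g r / (2 * (K+1)))); [apply Rmult_le_compat_l; lra|].
      replace ((K + 1) * (g r / (2 * (K + 1)))) with (g r / 2) by (field; lra). lra. }
    assert (E (r + d)).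
    { split; [lra|]. intros t Ht. destruct (Rlt_le_dec t r); [apply Hbelow; lra|].
      pose proof (lip_lower K g a b r t HL ltac:(lra) ltac:(lra)).
      rewrite Rabs_left1 in H by lra. nra. }
    pose proof (Hub _ H). lra. }
  assert (Hge : 0 <= g r).
  { destruct (Rle_lt_dec 0 (g r)) as [|Hlt]; auto. exfalso.
    assert (Har' : a < r) by (destruct (Req_dec a r); [subst; lra| lra]).
    set (d := Rmin (r - a) (- g r / (2 * (K + 1)))).
    assert (Hd : 0 < d) by (unfold d; apply Rmin_glb_lt; [lra| apply Rdiv_lt_0_compat; lra]).
    assert (Hd1 : d <= r - a) by apply Rmin_l.
    assert (Hd2 : d <= - g r / (2 * (K + 1))) by apply Rmin_r.
    assert (HKd : K * d < - g r).
    { apply Rle_lt_trans with ((K+1) * d); [nra|].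
      apply Rle_lt_trans with ((K+1) * (- g r / (2 * (K+1)))); [apply Rmult_le_compat_l; lra|].
      replace ((K + 1) * (- g r / (2 * (K + 1)))) with (- g r / 2) by (field; lra). lra. }
    pose proof (Hbelow (r - d) ltac:(lra)).
    pose proof (lip_lower K g a b r (r - d) HL ltac:(lra) ltac:(lra)).
    specialize (HL r (r - d) ltac:(lra) ltac:(lra)).
    rewrite (Rabs_right (r - (r - d))) in HL by lra. elimR; nra. }
  exists r. split; [|split; [lra| auto]].
  split; auto. destruct (Req_dec a r); [subst; lra| lra].
Qed.

Lemma last_time K g a b : 0 <= K -> Lip K g a b -> a <= b -> 0 <= g a -> g b < 0 ->
  exists s, a <= s < b /\ g s = 0 /\ forall t, s < t <= b -> g t < 0.
Proof.
  intros HK HL Hab Ha Hb.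
  set (h := fun t => - g (a + b - t)).
  assert (Hh : Lip K h a b).
  { intros s t Hs Ht. unfold h. specialize (HL (a + b - s) (a + b - t) ltac:(lra) ltac:(lra)).
    replace (- g (a + b - s) - - g (a + b - t)) with (- (g (a + b - s) - g (a + b - t))) by ring.
    rewrite Rabs_Ropp. replace (a + b - s - (a + b - t)) with (- (s - t)) in HL by ring.
    rewrite Rabs_Ropp in HL. auto. }
  assert (Ha' : 0 < h a) by (unfold h; replace (a + b - a) with b by ring; lra).
  assert (Hb' : h b <= 0) by (unfold h; replace (a + b - b) with a by ring; lra).
  destruct (first_time K h a b HK Hh Hab Ha' Hb') as [r [Hr [Hr0 Hpos]]].
  - exists (a + b - r). split; [lra|]. split.
    + unfold h in Hr0. lra.
    + intros t Ht. specialize (Hpos (a + b - t) ltac:(lra)). unfold h in Hpos.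
      replace (a + b - (a + b - t)) with t in Hpos by ring. lra.
Qed.

Lemma left_limit K g a b s r : 0 <= K -> Lip K g a b -> a <= s -> s < r -> r <= b ->
  (forall t, s < t < r -> g t < 0) -> g r <= 0.
Proof.
  intros HK HL Has Hsr Hrb Hneg.
  destruct (Rle_lt_dec (g r) 0) as [|Hgt]; auto. exfalso.
  set (d := Rmin ((r - s) / 2) (g r / (2 * (K + 1)))).
  assert (Hd : 0 < d) by (unfold d; apply Rmin_glb_lt; apply Rdiv_lt_0_compat; lra).
  assert (Hd1 : d <= (r - s) / 2) by apply Rmin_l.
  assert (Hd2 : d <= g r / (2 * (K + 1))) by apply Rmin_r.
  assert (HKd : K * d < g r).
  { apply Rle_lt_trans with ((K+1) * d); [nra|].
    apply Rle_lt_trans with ((K+1) * (g r / (2 * (K+1)))); [apply Rmult_le_compat_l; lra|].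
    replace ((K + 1) * (g r / (2 * (K + 1)))) with (g r / 2) by (field; lra). lra. }
  pose proof (Hneg (r - d) ltac:(lra)).
  specialize (HL r (r - d) ltac:(lra) ltac:(lra)).
  rewrite (Rabs_right (r - (r - d))) in HL by lra. elimR; nra.
Qed.

Definition ninf a b := Rmax (Rabs a) (Rabs b).
Definition GR pu pv w1u w1v w2u w2v qu qv su sv :=
  Rmax (Rmax (Rabs (w1u - pu) + Rabs (w2u - w1u) + Rabs (qu - w2u) + su)
             (Rabs (w1v - pv) + Rabs (w2v - w1v) + Rabs (qv - w2v) + sv))
       (ninf (w1u - pu) (w1v - pv) + ninf (w2u - w1u) (w2v - w1v) + ninf (qu - w2u) (qv - w2v)) / 2.

Lemma gabsR x : gabs Rops x = Rabs x.
Proof. unfold gabs, gneg; simpl. destruct (Rle_dec 0 x); [rewrite Rabs_right|rewrite Rabs_left]; lra. Qed.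
Lemma gG_R a b c d e f g h i j : gG Rops a b c d e f g h i j = GR a b c d e f g h i j.
Proof. unfold gG, gninf. rewrite !gabsR. reflexivity. Qed.
Lemma gite4_R a b x y : gite4 Rops a b x y = if Rle_dec a b then x else y.
Proof. destruct x as [[[? ?] ?] ?], y as [[[? ?] ?] ?]. simpl. destruct (Rle_dec a b); reflexivity. Qed.

Lemma Rmax_mono a b a' b' : a <= a' -> b <= b' -> Rmax a b <= Rmax a' b'.
Proof. intros. apply Rmax_lub; [apply Rle_trans with a'|apply Rle_trans with b']; auto; [apply Rmax_l|apply Rmax_r]. Qed.
Lemma G_mono tu tv L tu' tv' L' su sv : tu <= tu' -> tv <= tv' -> L <= L' ->
  Rmax (Rmax (tu + su) (tv + sv)) L / 2 <= Rmax (Rmax (tu' + su) (tv' + sv)) L' / 2.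
Proof. intros. unfold Rdiv. apply Rmult_le_compat_r; [lra|].
  apply Rmax_mono; [apply Rmax_mono|]; lra. Qed.

Lemma GR_swap pu pv w1u w1v w2u w2v qu qv su sv :
  GR pu pv w1u w1v w2u w2v qu qv su sv = GR pv pu w1v w1u w2v w2u qv qu sv su.
Proof. unfold GR, ninf. rewrite (Rmax_comm (_ + su)). rewrite (Rmax_comm (Rabs (w1u - pu))),
  (Rmax_comm (Rabs (w2u - w1u))), (Rmax_comm (Rabs (qu - w2u))). reflexivity. Qed.

Lemma Rabs_e e : e * e = 1 -> Rabs e = 1.
Proof. intros. destruct (Rabs_cases e) as [[? E]|[? E]]; rewrite E; nra. Qed.
Lemma Rabs_flip e x y : e * e = 1 -> Rabs (e * x - y) = Rabs (x - e * y).
Proof. intros. replace (e * x - y) with (e * (x - e * y)) by (rewrite Rmult_minus_distr_l, <- Rmult_assoc, H; ring).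
  rewrite Rabs_mult, Rabs_e by auto. ring. Qed.
Lemma Rabs_flip2 e x y : e * e = 1 -> Rabs (e * x - e * y) = Rabs (x - y).
Proof. intros. rewrite <- Rmult_minus_distr_l, Rabs_mult, Rabs_e by auto. ring. Qed.
Lemma GR_flip e f pu pv w1u w1v w2u w2v qu qv su sv : e * e = 1 -> f * f = 1 ->
  GR (e * pu) (f * pv) w1u w1v w2u w2v (e * qu) (f * qv) su sv =
  GR pu pv (e * w1u) (f * w1v) (e * w2u) (f * w2v) qu qv su sv.
Proof. intros He Hf. unfold GR, ninf.
  rewrite !(Rabs_flip2 e) by auto. rewrite !(Rabs_flip2 f) by auto.
  rewrite !(Rabs_flip e) by auto. rewrite !(Rabs_flip f) by auto. reflexivity. Qed.

(** * Abstract lower-bound setting *)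
Record LBH (U0 U1 V0 V1 : R -> R) (a b : R) : Prop := {
  lb_ab : a <= b; lU0 : Lip 1 U0 a b; lU1 : Lip 1 U1 a b; lV0 : Lip 1 V0 a b; lV1 : Lip 1 V1 a b;
  lsep : forall t, a <= t <= b -> 2 <= Rabs (U1 t - U0 t) + Rabs (V1 t - V0 t) }.

Definition dU (U0 U1 : R -> R) t := U1 t - U0 t.
Definition sS (U0 U1 : R -> R) a b := Rabs ((U0 b + U1 b) - (U0 a + U1 a)).

Lemma pair_step x y d : Rabs x <= d -> Rabs y <= d -> Rabs (y - x) + Rabs (y + x) <= 2 * d.
Proof. intros. elimR; lra. Qed.
Lemma pair_L x y d : Rabs x <= d -> Rabs y <= d -> Rabs (y - x) <= 2 * d.
Proof. intros. elimR; lra. Qed.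

Lemma tv_bound A0 A1 A2 A3 B0 B1 B2 B3 d1 d2 d3 :
  Rabs (A1 - A0) <= d1 -> Rabs (B1 - B0) <= d1 -> Rabs (A2 - A1) <= d2 -> Rabs (B2 - B1) <= d2 ->
  Rabs (A3 - A2) <= d3 -> Rabs (B3 - B2) <= d3 ->
  Rabs ((B1 - A1) - (B0 - A0)) + Rabs ((B2 - A2) - (B1 - A1)) + Rabs ((B3 - A3) - (B2 - A2))
  + Rabs ((A3 + B3) - (A0 + B0)) <= 2 * (d1 + d2 + d3).
Proof.
  intros. pose proof (pair_step (A1 - A0) (B1 - B0) d1 H H0).
  pose proof (pair_step (A2 - A1) (B2 - B1) d2 H1 H2).
  pose proof (pair_step (A3 - A2) (B3 - B2) d3 H3 H4).
  pose proof (Rabs_triang ((B1 - B0) + (A1 - A0)) (((B2 - B1) + (A2 - A1)) + ((B3 - B2) + (A3 - A2)))).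
  pose proof (Rabs_triang ((B2 - B1) + (A2 - A1)) ((B3 - B2) + (A3 - A2))).
  replace ((A3 + B3) - (A0 + B0)) with (((B1 - B0) + (A1 - A0)) + (((B2 - B1) + (A2 - A1)) + ((B3 - B2) + (A3 - A2)))) by ring.
  replace ((B1 - A1) - (B0 - A0)) with ((B1 - B0) - (A1 - A0)) by ring.
  replace ((B2 - A2) - (B1 - A1)) with ((B2 - B1) - (A2 - A1)) by ring.
  replace ((B3 - A3) - (B2 - A2)) with ((B3 - B2) - (A3 - A2)) by ring. lra.
Qed.

Lemma lipf K f a b s t : Lip K f a b -> a <= s <= b -> a <= t <= b -> s <= t -> Rabs (f t - f s) <= K * (t - s).
Proof. intros HL Hs Ht Hst. specialize (HL t s Ht Hs). rewrite (Rabs_right (t - s)) in HL by lra. auto. Qed.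

Section LB.
Variables (U0 U1 V0 V1 : R -> R) (a b : R).
Hypothesis H : LBH U0 U1 V0 V1 a b.
Local Notation du := (dU U0 U1).
Local Notation dv := (dU V0 V1).
Local Notation su := (sS U0 U1 a b).
Local Notation sv := (sS V0 V1 a b).

Lemma witness t1 t2 : a <= t1 -> t1 <= t2 -> t2 <= b ->
  GR (du a) (dv a) (du t1) (dv t1) (du t2) (dv t2) (du b) (dv b) su sv <= b - a.
Proof.
  intros. destruct H as [Hab L0 L1 L2 L3 _].
  assert (F : forall f, Lip 1 f a b -> Rabs (f t1 - f a) <= t1 - a /\ Rabs (f t2 - f t1) <= t2 - t1 /\ Rabs (f b - f t2) <= b - t2).
  { intros f Hf. split; [|split]; (eapply Rle_trans; [apply (lipf 1 f a b); [assumption|lra..]|]); lra. }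
  destruct (F _ L0) as [a1 [a2 a3]]. destruct (F _ L1) as [b1 [b2 b3]].
  destruct (F _ L2) as [c1 [c2 c3]]. destruct (F _ L3) as [e1 [e2 e3]].
  unfold GR, dU, sS.
  match goal with |- ?X / 2 <= _ => assert (X <= 2 * (b - a)); [|lra] end.
  apply Rmax_lub; [apply Rmax_lub|].
  - pose proof (tv_bound (U0 a) (U0 t1) (U0 t2) (U0 b) (U1 a) (U1 t1) (U1 t2) (U1 b) _ _ _ a1 b1 a2 b2 a3 b3). lra.
  - pose proof (tv_bound (V0 a) (V0 t1) (V0 t2) (V0 b) (V1 a) (V1 t1) (V1 t2) (V1 b) _ _ _ c1 e1 c2 e2 c3 e3). lra.
  - unfold ninf.
    assert (HP : forall x y p q d, Rabs x <= d -> Rabs y <= d -> Rabs p <= d -> Rabs q <= d ->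
       Rmax (Rabs (y - x)) (Rabs (q - p)) <= 2 * d).
    { intros. apply Rmax_lub; apply pair_L; auto. }
    pose proof (HP _ _ _ _ _ a1 b1 c1 e1). pose proof (HP _ _ _ _ _ a2 b2 c2 e2).
    pose proof (HP _ _ _ _ _ a3 b3 c3 e3).
    replace (U1 t1 - U0 t1 - (U1 a - U0 a)) with ((U1 t1 - U1 a) - (U0 t1 - U0 a)) by ring.
    replace (V1 t1 - V0 t1 - (V1 a - V0 a)) with ((V1 t1 - V1 a) - (V0 t1 - V0 a)) by ring.
    replace (U1 t2 - U0 t2 - (U1 t1 - U0 t1)) with ((U1 t2 - U1 t1) - (U0 t2 - U0 t1)) by ring.
    replace (V1 t2 - V0 t2 - (V1 t1 - V0 t1)) with ((V1 t2 - V1 t1) - (V0 t2 - V0 t1)) by ring.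
    replace (U1 b - U0 b - (U1 t2 - U0 t2)) with ((U1 b - U1 t2) - (U0 b - U0 t2)) by ring.
    replace (V1 b - V0 b - (V1 t2 - V0 t2)) with ((V1 b - V1 t2) - (V0 b - V0 t2)) by ring.
    lra.
Qed.

Lemma du_lip : Lip 2 du a b.
Proof. intros s t Hs Ht. destruct H as [_ L0 L1 _ _ _]. specialize (L0 s t Hs Ht). specialize (L1 s t Hs Ht).
  unfold dU. rewrite Rmult_1_l in L0, L1. elimR; lra. Qed.
Lemma dv_lip : Lip 2 dv a b.
Proof. intros s t Hs Ht. destruct H as [_ _ _ L0 L1 _]. specialize (L0 s t Hs Ht). specialize (L1 s t Hs Ht).
  unfold dU. rewrite Rmult_1_l in L0, L1. elimR; lra. Qed.
End LB.

Lemma Lip_sub K f a b a' b' : Lip K f a b -> a <= a' -> b' <= b -> Lip K f a' b'.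
Proof. intros HL ? ? s t ? ?. apply HL; lra. Qed.

Lemma LBH_swap U0 U1 V0 V1 a b : LBH U0 U1 V0 V1 a b -> LBH V0 V1 U0 U1 a b.
Proof. intros [? ? ? ? ? S]. split; auto. intros t Ht. specialize (S t Ht). lra. Qed.

Lemma LBH_flip e f U0 U1 V0 V1 a b : Rabs e = 1 -> Rabs f = 1 -> LBH U0 U1 V0 V1 a b ->
  LBH (fun t => e * U0 t) (fun t => e * U1 t) (fun t => f * V0 t) (fun t => f * V1 t) a b.
Proof.
  intros He Hf [Hab L0 L1 L2 L3 S].
  assert (G : forall g c, Rabs c = 1 -> Lip 1 g a b -> Lip 1 (fun t => c * g t) a b).
  { intros g c Hc HL s t Hs Ht. rewrite <- Rmult_minus_distr_l, Rabs_mult, Hc, Rmult_1_l. apply HL; auto. }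
  split; auto. intros t Ht. specialize (S t Ht).
  rewrite <- !Rmult_minus_distr_l, !Rabs_mult, He, Hf. lra.
Qed.

Lemma betaR_eq pu pv qu qv : gbetaN Rops pu pv qu qv =
  Rmax (Rmax (Rmin pv qv) 2) (Rmin (if Rle_dec pv qv then (pu+qu+pv+qv)/2 else (pv+qv-pu-qu)/2) (Rmax (Rmax pv qv) 2)).
Proof. reflexivity. Qed.
Lemma aNW_eq pu pv qu qv : gaNW Rops pu pv qu qv = Rmin (Rmax 2 (Rmin (pv - pu) (qv - qu))) (Rmax (0 - qu) 2).
Proof. reflexivity. Qed.
Lemma bNW_eq pu pv qu qv : gbNW Rops pu pv qu qv = Rmin (Rmax 2 (Rmin (pv - pu) (qv - qu))) (Rmax pv 2).
Proof. reflexivity. Qed.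

Lemma ninf00 y : ninf (0 - 0) (y - y) = 0.
Proof. unfold ninf. replace (0 - 0) with 0 by ring. replace (y - y) with 0 by ring. rewrite Rabs_R0. apply Rmax_left; lra. Qed.

Lemma adj_opt2 pu pv qu qv su sv x : 0 <= pu -> 0 <= pv -> qu <= 0 -> 0 <= qv -> 2 <= x ->
  GR pu pv 0 (gbetaN Rops pu pv qu qv) 0 (gbetaN Rops pu pv qu qv) qu qv su sv <= GR pu pv 0 x 0 x qu qv su sv.
Proof.
  intros. unfold GR. rewrite !ninf00. apply G_mono.
  - lra.
  - rewrite betaR_eq. replace (x - x) with 0 by ring. elimR; lra.
  - set (f := ninf (0 - pu) (x - pv)). set (h := ninf (qu - 0) (qv - x)).
    assert (pu <= f /\ x - pv <= f /\ pv - x <= f) by (unfold f, ninf; elimR; lra).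
    assert (- qu <= h /\ qv - x <= h /\ x - qv <= h) by (unfold h, ninf; elimR; lra).
    clearbody f h. unfold ninf. rewrite betaR_eq. elimR; lra.
Qed.

Lemma adj_opt pu pv qu qv su sv x : 0 <= pu -> 0 <= pv -> qu <= 0 -> 0 <= qv -> (2 <= x \/ x <= -2) ->
  GR pu pv 0 (gbetaN Rops pu pv qu qv) 0 (gbetaN Rops pu pv qu qv) qu qv su sv <= GR pu pv 0 x 0 x qu qv su sv.
Proof.
  intros H1 H2 H3 H4 [H5|H5]; [apply adj_opt2; auto|].
  eapply Rle_trans; [apply (adj_opt2 _ _ _ _ _ _ 2); lra|].
  unfold GR. rewrite !ninf00. apply G_mono.
  - lra.
  - replace (2 - 2) with 0 by ring. replace (x - x) with 0 by ring. elimR; lra.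
  - unfold ninf. elimR; lra.
Qed.

Lemma nw_opt pu pv qu qv su sv al be : 0 <= pu -> 0 <= pv -> qu <= 0 -> qv <= 0 -> al <= -2 -> 2 <= be ->
  GR pu pv 0 (gbNW Rops pu pv qu qv) (0 - gaNW Rops pu pv qu qv) 0 qu qv su sv <= GR pu pv 0 be al 0 qu qv su sv.
Proof.
  intros. unfold GR. apply G_mono.
  - rewrite aNW_eq. elimR; lra.
  - rewrite bNW_eq. elimR; lra.
  - set (f1 := ninf (0 - pu) (be - pv)). set (f2 := ninf (al - 0) (0 - be)). set (f3 := ninf (qu - al) (qv - 0)).
    assert (pu <= f1 /\ be - pv <= f1 /\ pv - be <= f1) by (unfold f1, ninf; elimR; lra).
    assert (- al <= f2 /\ be <= f2) by (unfold f2, ninf; elimR; lra).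
    assert (qu - al <= f3 /\ al - qu <= f3 /\ - qv <= f3) by (unfold f3, ninf; elimR; lra).
    clearbody f1 f2 f3. unfold ninf. rewrite aNW_eq, bNW_eq. elimR; lra.
Qed.

Section CAN.
Variables (U0 U1 V0 V1 : R -> R) (a b : R).
Hypothesis H : LBH U0 U1 V0 V1 a b.
Local Notation du := (dU U0 U1).
Local Notation dv := (dU V0 V1).
Local Notation su := (sS U0 U1 a b).
Local Notation sv := (sS V0 V1 a b).

Lemma sepH t : a <= t <= b -> 2 <= Rabs (du t) + Rabs (dv t).
Proof. intros. destruct H. unfold dU. auto. Qed.

Lemma lb_adjN : 0 <= du a -> 0 <= dv a -> du b <= 0 -> 0 <= dv b ->
  GR (du a) (dv a) 0 (gbetaN Rops (du a) (dv a) (du b) (dv b)) 0 (gbetaN Rops (du a) (dv a) (du b) (dv b))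
     (du b) (dv b) su sv <= b - a.
Proof.
  intros H1 H2 H3 H4. pose proof (lb_ab _ _ _ _ _ _ H) as Hab.
  assert (exists tau, a <= tau <= b /\ du tau = 0) as [tau [Ht Hz]].
  { destruct (Req_dec (du a) 0). - exists a; split; [lra|auto].
    - destruct (first_time 2 du a b ltac:(lra) (du_lip _ _ _ _ _ _ H) Hab ltac:(lra) H3) as [r [Hr [Hr0 _]]].
      exists r; split; [lra|auto]. }
  pose proof (sepH tau Ht) as S. rewrite Hz, Rabs_R0 in S.
  pose proof (witness _ _ _ _ _ _ H tau tau ltac:(lra) ltac:(lra) ltac:(lra)) as W.
  rewrite Hz in W. eapply Rle_trans; [|exact W]. apply adj_opt; auto.
  destruct (Rabs_cases (dv tau)) as [[? E]|[? E]]; rewrite E in S; lra.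
Qed.

Lemma lb_opp : 0 <= du a -> 0 <= dv a -> du b < 0 -> dv b < 0 ->
  GR (du a) (dv a) 0 (gbNW Rops (du a) (dv a) (du b) (dv b)) (0 - gaNW Rops (du a) (dv a) (du b) (dv b)) 0
     (du b) (dv b) su sv <= b - a \/
  GR (du a) (dv a) (gbNW Rops (dv a) (du a) (dv b) (du b)) 0 0 (0 - gaNW Rops (dv a) (du a) (dv b) (du b))
     (du b) (dv b) su sv <= b - a.
Proof.
  intros H1 H2 H3 H4. pose proof (lb_ab _ _ _ _ _ _ H) as Hab.
  pose proof (du_lip _ _ _ _ _ _ H) as LU. pose proof (dv_lip _ _ _ _ _ _ H) as LV.
  set (phi := fun t => Rmin (du t) (dv t)).
  assert (LP : Lip 2 phi a b).
  { intros s t Hs Ht. specialize (LU s t Hs Ht). specialize (LV s t Hs Ht). unfold phi.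
    revert LU LV. generalize (du s) (du t) (dv s) (dv t) (2 * Rabs (s - t)). intros. elimR; lra. }
  destruct (last_time 2 phi a b ltac:(lra) LP Hab) as [s [Hs [Hs0 Hneg]]].
  { unfold phi. apply Rmin_glb; auto. }
  { unfold phi. destruct (Rmin_cases (du b) (dv b)) as [[? ->]|[? ->]]; lra. }
  assert (Hsab : a <= s <= b) by lra.
  pose proof (sepH s Hsab) as Ss.
  unfold phi in Hs0. destruct (Rmin_cases (du s) (dv s)) as [[Hc E]|[Hc E]]; rewrite E in Hs0.
  -
    left. rewrite Hs0, Rabs_R0 in Ss.
    assert (Hv : 2 <= dv s) by (destruct (Rabs_cases (dv s)) as [[? E']|[? E']]; rewrite E' in Ss; lra).
    destruct (first_time 2 dv s b ltac:(lra) (Lip_sub 2 dv a b s b LV ltac:(lra) ltac:(lra)) ltac:(lra) ltac:(lra) ltac:(lra))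
      as [r [Hr [Hr0 Hpos]]].
    assert (Hu : du r <= 0).
    { apply (left_limit 2 du a b s r); try lra; auto.
      intros t Ht. specialize (Hneg t ltac:(lra)). specialize (Hpos t ltac:(lra)). unfold phi in Hneg.
      revert Hneg Hpos. generalize (du t) (dv t). intros. elimR; lra. }
    pose proof (sepH r ltac:(lra)) as Sr. rewrite Hr0, Rabs_R0 in Sr.
    assert (Hu2 : du r <= -2) by (destruct (Rabs_cases (du r)) as [[? E']|[? E']]; rewrite E' in Sr; lra).
    pose proof (witness _ _ _ _ _ _ H s r ltac:(lra) ltac:(lra) ltac:(lra)) as W.
    rewrite Hs0, Hr0 in W. eapply Rle_trans; [|exact W]. apply nw_opt; lra.
  -
    right. rewrite Hs0, Rabs_R0 in Ss.
    assert (Hv : 2 <= du s) by (destruct (Rabs_cases (du s)) as [[? E']|[? E']]; rewrite E' in Ss; lra).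
    destruct (first_time 2 du s b ltac:(lra) (Lip_sub 2 du a b s b LU ltac:(lra) ltac:(lra)) ltac:(lra) ltac:(lra) ltac:(lra))
      as [r [Hr [Hr0 Hpos]]].
    assert (Hu : dv r <= 0).
    { apply (left_limit 2 dv a b s r); try lra; auto.
      intros t Ht. specialize (Hneg t ltac:(lra)). specialize (Hpos t ltac:(lra)). unfold phi in Hneg.
      revert Hneg Hpos. generalize (du t) (dv t). intros. elimR; lra. }
    pose proof (sepH r ltac:(lra)) as Sr. rewrite Hr0, Rabs_R0 in Sr.
    assert (Hu2 : dv r <= -2) by (destruct (Rabs_cases (dv r)) as [[? E']|[? E']]; rewrite E' in Sr; lra).
    pose proof (witness _ _ _ _ _ _ H s r ltac:(lra) ltac:(lra) ltac:(lra)) as W.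
    rewrite Hs0, Hr0 in W. eapply Rle_trans; [|exact W].
    rewrite GR_swap. rewrite (GR_swap (du a)). apply nw_opt; lra.
Qed.
End CAN.

Lemma lb_can U0 U1 V0 V1 a b : LBH U0 U1 V0 V1 a b -> 0 <= dU U0 U1 a -> 0 <= dU V0 V1 a ->
  (let '(w1u, w1v, w2u, w2v) := gwcan Rops (dU U0 U1 a) (dU V0 V1 a) (dU U0 U1 b) (dU V0 V1 b)
                                   (sS U0 U1 a b) (sS V0 V1 a b) in
   GR (dU U0 U1 a) (dU V0 V1 a) w1u w1v w2u w2v (dU U0 U1 b) (dU V0 V1 b) (sS U0 U1 a b) (sS V0 V1 a b)) <= b - a.
Proof.
  intros H H1 H2. pose proof (lb_ab _ _ _ _ _ _ H) as Hab.
  unfold gwcan. rewrite !gite4_R. cbv zeta.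
  change (ocst Rops 0) with 0. change (gneg Rops ?x) with (0 - x).
  destruct (Rle_dec 0 (dU U0 U1 b)); destruct (Rle_dec 0 (dU V0 V1 b)).
  - apply (witness _ _ _ _ _ _ H a a); lra.
  - pose proof (lb_adjN _ _ _ _ _ _ (LBH_swap _ _ _ _ _ _ H) H2 H1 ltac:(lra) r) as W.
    rewrite GR_swap. exact W.
  - apply lb_adjN; auto; lra.
  - rewrite !gG_R.
    destruct (lb_opp _ _ _ _ _ _ H H1 H2 ltac:(lra) ltac:(lra)) as [W|W];
    match goal with |- context [if Rle_dec ?x ?y then _ else _] => destruct (Rle_dec x y) end; lra.
Qed.

Lemma dU_scale e U0 U1 t : dU (fun t => e * U0 t) (fun t => e * U1 t) t = e * dU U0 U1 t.
Proof. unfold dU. ring. Qed.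
Lemma sS_scale e U0 U1 a b : Rabs e = 1 -> sS (fun t => e * U0 t) (fun t => e * U1 t) a b = sS U0 U1 a b.
Proof. intros. unfold sS. replace (e * U0 b + e * U1 b - (e * U0 a + e * U1 a)) with (e * (U0 b + U1 b - (U0 a + U1 a))) by ring.
  rewrite Rabs_mult, H. ring. Qed.

Lemma gsgn_R x : gsgn Rops x = if Rle_dec 0 x then 1 else -1.
Proof. reflexivity. Qed.
Lemma gsgn_sq x : gsgn Rops x * gsgn Rops x = 1.
Proof. rewrite gsgn_R. destruct (Rle_dec 0 x); ring. Qed.
Lemma gsgn_abs x : Rabs (gsgn Rops x) = 1.
Proof. rewrite gsgn_R. destruct (Rle_dec 0 x); [apply Rabs_R1| rewrite Rabs_left; lra]. Qed.
Lemma gsgn_pos x : 0 <= gsgn Rops x * x.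
Proof. rewrite gsgn_R. destruct (Rle_dec 0 x); nra. Qed.

Lemma lb_gen U0 U1 V0 V1 a b : LBH U0 U1 V0 V1 a b ->
  (let '(w1u, w1v, w2u, w2v) := gW Rops (dU U0 U1 a) (dU V0 V1 a) (dU U0 U1 b) (dU V0 V1 b)
                                   (sS U0 U1 a b) (sS V0 V1 a b) in
   GR (dU U0 U1 a) (dU V0 V1 a) w1u w1v w2u w2v (dU U0 U1 b) (dU V0 V1 b) (sS U0 U1 a b) (sS V0 V1 a b)) <= b - a.
Proof.
  intros H. unfold gW. cbv zeta.
  set (e := gsgn Rops (dU U0 U1 a)). set (f := gsgn Rops (dU V0 V1 a)).
  pose proof (LBH_flip e f _ _ _ _ _ _ (gsgn_abs _) (gsgn_abs _) H) as H'.
  pose proof (lb_can _ _ _ _ _ _ H') as W.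
  rewrite !dU_scale, !sS_scale in W by apply gsgn_abs.
  specialize (W (gsgn_pos _) (gsgn_pos _)). fold e f in W.
  change (omul Rops e ?x) with (e * x). change (omul Rops f ?x) with (f * x).
  destruct (gwcan Rops (e * dU U0 U1 a) (f * dU V0 V1 a) (e * dU U0 U1 b) (f * dU V0 V1 b) (sS U0 U1 a b) (sS V0 V1 a b))
    as [[[w1 w2] w3] w4].
  rewrite GR_flip in W by apply gsgn_sq. exact W.
Qed.

Definition sameo (au av bu bv : R) :=
  ((0 <= au /\ 0 <= bu) \/ (au <= 0 /\ bu <= 0)) /\ ((0 <= av /\ 0 <= bv) \/ (av <= 0 /\ bv <= 0)).
Definition freeR u v := 2 <= Rabs u + Rabs v.
Definition segok au av bu bv := sameo au av bu bv /\ freeR au av /\ freeR bu bv.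

Lemma free_interp au av bu bv l : segok au av bu bv -> 0 <= l <= 1 ->
  freeR (au + l * (bu - au)) (av + l * (bv - av)).
Proof.
  unfold segok, sameo, freeR. intros [[Hu Hv] [Fa Fb]] Hl.
  assert (C1 : forall x y, 0 <= x -> 0 <= y -> Rabs (x + l * (y - x)) = x + l * (y - x))
    by (intros; apply Rabs_right; nra).
  assert (C2 : forall x y, x <= 0 -> y <= 0 -> Rabs (x + l * (y - x)) = - (x + l * (y - x)))
    by (intros; apply Rabs_left1; nra).
  destruct Hu as [[? ?]|[? ?]]; destruct Hv as [[? ?]|[? ?]];
  [rewrite (C1 au bu), (C1 av bv) | rewrite (C1 au bu), (C2 av bv) | rewrite (C2 au bu), (C1 av bv)
  | rewrite (C2 au bu), (C2 av bv)]; auto;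
  rewrite ?(Rabs_right au), ?(Rabs_right bu), ?(Rabs_right av), ?(Rabs_right bv),
    ?(Rabs_left1 au), ?(Rabs_left1 bu), ?(Rabs_left1 av), ?(Rabs_left1 bv) in * by lra; nra.
Qed.

Lemma segok_negu au av bu bv : segok au av bu bv -> segok (-1 * au) av (-1 * bu) bv.
Proof. unfold segok, sameo, freeR. intros [[Hu Hv] [Fa Fb]].
  replace (-1 * au) with (- au) by ring. replace (-1 * bu) with (- bu) by ring. rewrite !Rabs_Ropp.
  split; [split|split]; auto; lra. Qed.
Lemma segok_negv au av bu bv : segok au av bu bv -> segok au (-1 * av) bu (-1 * bv).
Proof. unfold segok, sameo, freeR. intros [[Hu Hv] [Fa Fb]].
  replace (-1 * av) with (- av) by ring. replace (-1 * bv) with (- bv) by ring. rewrite !Rabs_Ropp.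
  split; [split|split]; auto; lra. Qed.
Lemma segok_1 au av bu bv : segok au av bu bv -> segok (1 * au) av (1 * bu) bv /\ segok au (1 * av) bu (1 * bv).
Proof. rewrite !Rmult_1_l. auto. Qed.
Lemma segok_e e f au av bu bv : (e = 1 \/ e = -1) -> (f = 1 \/ f = -1) -> segok au av bu bv ->
  segok (e * au) (f * av) (e * bu) (f * bv).
Proof.
  intros [->| ->] [->| ->] H; rewrite ?Rmult_1_l; auto.
  - apply segok_negv; auto.
  - apply segok_negu; auto.
  - apply segok_negv, segok_negu; auto.
Qed.

Lemma gsgn_cases x : gsgn Rops x = 1 \/ gsgn Rops x = -1.
Proof. unfold gsgn. simpl. destruct (Rle_dec 0 x); auto. Qed.
Lemma gsgn_pos' x : 0 <= gsgn Rops x * x.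
Proof. unfold gsgn; simpl. destruct (Rle_dec 0 x); nra. Qed.

Lemma betaN_ge2 a b c d : 2 <= gbetaN Rops a b c d.
Proof. rewrite betaR_eq. eapply Rle_trans; [|apply Rmax_l]. apply Rmax_r. Qed.
Lemma aNW_ge2 a b c d : 2 <= gaNW Rops a b c d.
Proof. rewrite aNW_eq. elimR; lra. Qed.
Lemma bNW_ge2 a b c d : 2 <= gbNW Rops a b c d.
Proof. rewrite bNW_eq. elimR; lra. Qed.

Lemma wcan_ok pu pv qu qv su sv : 0 <= pu -> 0 <= pv -> freeR pu pv -> freeR qu qv ->
  let '(w1u, w1v, w2u, w2v) := gwcan Rops pu pv qu qv su sv in
  segok pu pv w1u w1v /\ segok w1u w1v w2u w2v /\ segok w2u w2v qu qv.
Proof.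
  intros H1 H2 F1 F2. unfold gwcan. rewrite !gite4_R. cbv zeta.
  change (ocst Rops 0) with 0. change (gneg Rops ?x) with (0 - x).
  unfold segok, sameo, freeR in *.
  pose proof (betaN_ge2 pv pu qv qu). pose proof (betaN_ge2 pu pv qu qv).
  pose proof (aNW_ge2 pu pv qu qv). pose proof (bNW_ge2 pu pv qu qv).
  pose proof (aNW_ge2 pv pu qv qu). pose proof (bNW_ge2 pv pu qv qu).
  revert H H0 H3 H4 H5 H6.
  generalize (gbetaN Rops pv pu qv qu) (gbetaN Rops pu pv qu qv) (gaNW Rops pu pv qu qv)
    (gbNW Rops pu pv qu qv) (gaNW Rops pv pu qv qu) (gbNW Rops pv pu qv qu).
  intros b1 b2 a1 a2 a3 a4 ? ? ? ? ? ?.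
  destruct (Rle_dec 0 qu); destruct (Rle_dec 0 qv);
  [| | |destruct (Rle_dec _ _)];
  rewrite ?Rabs_R0, ?(Rabs_right b1), ?(Rabs_right b2), ?(Rabs_right a2), ?(Rabs_right a4),
    ?(Rabs_left1 (0 - a1)), ?(Rabs_left1 (0 - a3)) by lra;
  (split; [|split]); (split; [|split]); try lra.
Qed.

Lemma W_ok pu pv qu qv su sv : freeR pu pv -> freeR qu qv ->
  let '(w1u, w1v, w2u, w2v) := gW Rops pu pv qu qv su sv in
  segok pu pv w1u w1v /\ segok w1u w1v w2u w2v /\ segok w2u w2v qu qv.
Proof.
  intros F1 F2. unfold gW. cbv zeta.
  set (e := gsgn Rops pu). set (f := gsgn Rops pv).
  assert (He : e = 1 \/ e = -1) by apply gsgn_cases. assert (Hf : f = 1 \/ f = -1) by apply gsgn_cases.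
  assert (Fl : forall x y, freeR x y -> freeR (e * x) (f * y)).
  { unfold freeR. intros. destruct He as [-> | ->]; destruct Hf as [-> | ->];
    rewrite ?Rabs_mult, ?Rabs_R1, ?(Rabs_left (-1)) by lra; lra. }
  pose proof (wcan_ok (e * pu) (f * pv) (e * qu) (f * qv) su sv (gsgn_pos' _) (gsgn_pos' _) (Fl _ _ F1) (Fl _ _ F2)) as W.
  change (omul Rops e ?x) with (e * x). change (omul Rops f ?x) with (f * x).
  destruct (gwcan Rops (e * pu) (f * pv) (e * qu) (f * qv) su sv) as [[[w1 w2] w3] w4].
  destruct W as [S1 [S2 S3]].
  assert (Ee : e * e = 1) by (destruct He as [-> | ->]; ring).
  assert (Ef : f * f = 1) by (destruct Hf as [-> | ->]; ring).
  apply (segok_e e f) in S1; auto. apply (segok_e e f) in S2; auto. apply (segok_e e f) in S3; auto.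
  rewrite <- !Rmult_assoc, Ee, Ef, !Rmult_1_l in S1, S3. auto.
Qed.

Definition Uq (z : pt) := fst z + snd z.
Definition Vq (z : pt) := fst z - snd z.

Lemma norm1_le_uv z z' d : Rabs (Uq z' - Uq z) <= d -> Rabs (Vq z' - Vq z) <= d -> norm1 (psub z' z) <= d.
Proof. destruct z, z'; unfold Uq, Vq, norm1, psub; simpl. intros. elimR; lra. Qed.

Lemma norminf_uv z z' : 2 <= Rabs (Uq z - Uq z') + Rabs (Vq z - Vq z') -> norminf (psub z z') >= 1.
Proof. destruct z, z'; unfold Uq, Vq, norminf, psub; simpl. intros. elimR; lra. Qed.

Lemma half_bound x y d : Rabs x <= 2 * d - Rabs y -> Rabs ((x + y)/2) <= d /\ Rabs ((x - y)/2) <= d.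
Proof. intros. split; elimR; lra. Qed.

Lemma del3 S c0 c1 c2 D : 0 <= c0 -> 0 <= c1 -> 0 <= c2 -> D = c0 + c1 + c2 -> Rabs S <= D ->
  Rabs (S * c0 / D) <= c0 /\ Rabs (S * c1 / D) <= c1 /\ Rabs (S - S * c0 / D - S * c1 / D) <= c2.
Proof.
  intros H0 H1 H2 HD HS. destruct (Req_dec D 0) as [E|E].
  - assert (S = 0) by (destruct (Rabs_cases S) as [[? E']|[? E']]; lra).
    subst. unfold Rdiv. rewrite !Rmult_0_l. rewrite !Rminus_0_r, Rabs_R0. lra.
  - assert (HDp : 0 < D) by (pose proof (Rabs_pos S); lra).
    assert (K : forall c, 0 <= c -> Rabs (S * c / D) <= c).
    { intros c Hc. unfold Rdiv. rewrite !Rabs_mult, (Rabs_right c) by lra.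
      rewrite (Rabs_right (/ D)) by (left; apply Rinv_0_lt_compat; lra).
      apply Rle_trans with (D * c * / D); [| right; field; lra].
      apply Rmult_le_compat_r; [left; apply Rinv_0_lt_compat; lra|]. nra. }
    split; [apply K; auto| split; [apply K; auto|]].
    replace (S - S * c0 / D - S * c1 / D) with (S * c2 / D) by (subst D; field; lra). apply K; auto.
Qed.

Lemma seg_uv z0 z1 ta tb t :
  Uq (seg z0 z1 ta tb t) = Uq z0 + (t - ta) / (tb - ta) * (Uq z1 - Uq z0) /\
  Vq (seg z0 z1 ta tb t) = Vq z0 + (t - ta) / (tb - ta) * (Vq z1 - Vq z0).
Proof. destruct z0, z1; unfold seg, Uq, Vq, padd, pscale, psub; simpl. split; ring. Qed.

Lemma seg_sep z0 z1 w0 w1 ta tb t : ta <= t <= tb ->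
  segok (Uq w0 - Uq z0) (Vq w0 - Vq z0) (Uq w1 - Uq z1) (Vq w1 - Vq z1) ->
  norminf (psub (seg w0 w1 ta tb t) (seg z0 z1 ta tb t)) >= 1 /\
  norminf (psub (seg z0 z1 ta tb t) (seg w0 w1 ta tb t)) >= 1.
Proof.
  intros Ht Hs. pose proof (lam_range ta tb t Ht) as Hl.
  pose proof (free_interp _ _ _ _ _ Hs Hl) as F. unfold freeR in F.
  destruct (seg_uv z0 z1 ta tb t) as [Ez Fz]. destruct (seg_uv w0 w1 ta tb t) as [Ew Fw].
  set (l := (t - ta) / (tb - ta)) in *.
  split; apply norminf_uv; rewrite Ez, Fz, Ew, Fw.
  - replace (Uq w0 + l * (Uq w1 - Uq w0) - (Uq z0 + l * (Uq z1 - Uq z0))) with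
      (Uq w0 - Uq z0 + l * (Uq w1 - Uq z1 - (Uq w0 - Uq z0))) by ring.
    replace (Vq w0 + l * (Vq w1 - Vq w0) - (Vq z0 + l * (Vq z1 - Vq z0))) with
      (Vq w0 - Vq z0 + l * (Vq w1 - Vq z1 - (Vq w0 - Vq z0))) by ring. exact F.
  - replace (Uq z0 + l * (Uq z1 - Uq z0) - (Uq w0 + l * (Uq w1 - Uq w0))) with
      (- (Uq w0 - Uq z0 + l * (Uq w1 - Uq z1 - (Uq w0 - Uq z0)))) by ring.
    replace (Vq z0 + l * (Vq z1 - Vq z0) - (Vq w0 + l * (Vq w1 - Vq w0))) with
      (- (Vq w0 - Vq z0 + l * (Vq w1 - Vq z1 - (Vq w0 - Vq z0)))) by ring. rewrite !Rabs_Ropp. exact F.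
Qed.

Definition taus (sch : nat -> R) (j : nat) : R :=
  match j with 0 => 0 | 1 => sch 1%nat | 2 => sch 2%nat | _ => sch 0%nat end.
Definition pts (A B : nat -> pt) (sch : nat -> R) (i j : nat) : pt :=
  match i with
  | 0 => match j with 0 => (fst (A 0%nat), snd (A 0%nat)) | 1 => (sch 3%nat, sch 4%nat)
         | 2 => (sch 7%nat, sch 8%nat) | _ => (fst (B 0%nat), snd (B 0%nat)) end
  | _ => match j with 0 => (fst (A 1%nat), snd (A 1%nat)) | 1 => (sch 5%nat, sch 6%nat)
         | 2 => (sch 9%nat, sch 10%nat) | _ => (fst (B 1%nat), snd (B 1%nat)) end
  end.

Lemma gl_R a b c d : gl Rops a b c d = ninf (c - a) (d - b).
Proof. unfold gl, gninf. rewrite !gabsR. reflexivity. Qed.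
Lemma ninf_ge x y : Rabs x <= ninf x y /\ Rabs y <= ninf x y.
Proof. unfold ninf. split; [apply Rmax_l|apply Rmax_r]. Qed.
Lemma uv0 S Sv du dv : Uq (gx0 Rops S Sv du dv, gy0 Rops S Sv du dv) = (S - du) / 2 /\
  Vq (gx0 Rops S Sv du dv, gy0 Rops S Sv du dv) = (Sv - dv) / 2.
Proof. unfold Uq, Vq, gx0, gy0, ghalf; simpl. split; field. Qed.
Lemma uv1 S Sv du dv : Uq (gx1 Rops S Sv du dv, gy1 Rops S Sv du dv) = (S + du) / 2 /\
  Vq (gx1 Rops S Sv du dv, gy1 Rops S Sv du dv) = (Sv + dv) / 2.
Proof. unfold Uq, Vq, gx1, gy1, ghalf; simpl. split; field. Qed.

Section CONS.
Variables (A B : nat -> pt) (w1u w1v w2u w2v : R).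
Let a0 := A 0%nat. Let a1 := A 1%nat. Let b0 := B 0%nat. Let b1 := B 1%nat.
Let pu := Uq a1 - Uq a0. Let pv := Vq a1 - Vq a0.
Let qu := Uq b1 - Uq b0. Let qv := Vq b1 - Vq b0.
Let Sgu := (Uq b0 + Uq b1) - (Uq a0 + Uq a1).
Let Sgv := (Vq b0 + Vq b1) - (Vq a0 + Vq a1).
Let sch := gsched Rops pu pv w1u w1v w2u w2v qu qv Sgu Sgv (Uq a0 + Uq a1) (Vq a0 + Vq a1).
Let T := gG Rops pu pv w1u w1v w2u w2v qu qv (gabs Rops Sgu) (gabs Rops Sgv).
Let d0 := gd0 Rops pu pv w1u w1v w2u w2v qu qv T.
Let d1 := gd1 Rops pu pv w1u w1v w2u w2v qu qv T.
Let tvu := gtv3 Rops pu w1u w2u qu.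
Let tvv := gtv3 Rops pv w1v w2v qv.
Let du0 := gdel Rops Sgu T tvu d0 (w1u - pu).
Let dv0 := gdel Rops Sgv T tvv d0 (w1v - pv).
Let du1 := gdel Rops Sgu T tvu d1 (w2u - w1u).
Let dv1 := gdel Rops Sgv T tvv d1 (w2v - w1v).
Let S1u := Uq a0 + Uq a1 + du0. Let S1v := Vq a0 + Vq a1 + dv0.
Let S2u := S1u + du1. Let S2v := S1v + dv1.

Lemma sch_0 : sch 0%nat = T. Proof. reflexivity. Qed.
Lemma sch_1 : sch 1%nat = d0. Proof. reflexivity. Qed.
Lemma sch_2 : sch 2%nat = d0 + d1. Proof. reflexivity. Qed.
Lemma sch_z01 : (sch 3%nat, sch 4%nat) = (gx0 Rops S1u S1v w1u w1v, gy0 Rops S1u S1v w1u w1v). Proof. reflexivity. Qed.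
Lemma sch_z11 : (sch 5%nat, sch 6%nat) = (gx1 Rops S1u S1v w1u w1v, gy1 Rops S1u S1v w1u w1v). Proof. reflexivity. Qed.
Lemma sch_z02 : (sch 7%nat, sch 8%nat) = (gx0 Rops S2u S2v w2u w2v, gy0 Rops S2u S2v w2u w2v). Proof. reflexivity. Qed.
Lemma sch_z12 : (sch 9%nat, sch 10%nat) = (gx1 Rops S2u S2v w2u w2v, gy1 Rops S2u S2v w2u w2v). Proof. reflexivity. Qed.

Let l0 := ninf (w1u - pu) (w1v - pv).
Let l1 := ninf (w2u - w1u) (w2v - w1v).
Let l2 := ninf (qu - w2u) (qv - w2v).
Let sl := (T - (l0 + l1 + l2) / 2) / 3.

Lemma T_eq : T = GR pu pv w1u w1v w2u w2v qu qv (Rabs Sgu) (Rabs Sgv).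
Proof. unfold T. rewrite !gabsR, gG_R. reflexivity. Qed.
Lemma T_facts : Rabs (w1u - pu) + Rabs (w2u - w1u) + Rabs (qu - w2u) + Rabs Sgu <= 2 * T /\
  Rabs (w1v - pv) + Rabs (w2v - w1v) + Rabs (qv - w2v) + Rabs Sgv <= 2 * T /\ l0 + l1 + l2 <= 2 * T.
Proof.
  rewrite T_eq. unfold GR. fold l0 l1 l2.
  pose proof (Rmax_l (Rmax (Rabs (w1u - pu) + Rabs (w2u - w1u) + Rabs (qu - w2u) + Rabs Sgu)
      (Rabs (w1v - pv) + Rabs (w2v - w1v) + Rabs (qv - w2v) + Rabs Sgv)) (l0 + l1 + l2)).
  pose proof (Rmax_r (Rmax (Rabs (w1u - pu) + Rabs (w2u - w1u) + Rabs (qu - w2u) + Rabs Sgu)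
      (Rabs (w1v - pv) + Rabs (w2v - w1v) + Rabs (qv - w2v) + Rabs Sgv)) (l0 + l1 + l2)).
  pose proof (Rmax_l (Rabs (w1u - pu) + Rabs (w2u - w1u) + Rabs (qu - w2u) + Rabs Sgu)
      (Rabs (w1v - pv) + Rabs (w2v - w1v) + Rabs (qv - w2v) + Rabs Sgv)).
  pose proof (Rmax_r (Rabs (w1u - pu) + Rabs (w2u - w1u) + Rabs (qu - w2u) + Rabs Sgu)
      (Rabs (w1v - pv) + Rabs (w2v - w1v) + Rabs (qv - w2v) + Rabs Sgv)).
  lra.
Qed.
Lemma l_facts : Rabs (w1u - pu) <= l0 /\ Rabs (w1v - pv) <= l0 /\ Rabs (w2u - w1u) <= l1 /\
  Rabs (w2v - w1v) <= l1 /\ Rabs (qu - w2u) <= l2 /\ Rabs (qv - w2v) <= l2.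
Proof. unfold l0, l1, l2. repeat split; apply ninf_ge. Qed.
Lemma d0_eq : d0 = l0 / 2 + sl.
Proof. unfold d0, gd0, gsl, ghalf. rewrite !gl_R. reflexivity. Qed.
Lemma d1_eq : d1 = l1 / 2 + sl.
Proof. unfold d1, gd1, gsl, ghalf. rewrite !gl_R. reflexivity. Qed.
Lemma tvu_eq : tvu = Rabs (w1u - pu) + Rabs (w2u - w1u) + Rabs (qu - w2u).
Proof. unfold tvu, gtv3. rewrite !gabsR. reflexivity. Qed.
Lemma tvv_eq : tvv = Rabs (w1v - pv) + Rabs (w2v - w1v) + Rabs (qv - w2v).
Proof. unfold tvv, gtv3. rewrite !gabsR. reflexivity. Qed.
Lemma gdel_eq Sg TT tv dur dd : gdel Rops Sg TT tv dur dd = Sg * (2 * dur - Rabs dd) / (2 * TT - tv).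
Proof. unfold gdel. rewrite gabsR. reflexivity. Qed.

Lemma dur_facts : 0 <= sl /\ 0 <= d0 /\ 0 <= d1 /\ 0 <= T - d0 - d1 /\
  T - d0 - d1 = l2 / 2 + sl.
Proof.
  pose proof T_facts as [_ [_ H]]. rewrite d0_eq, d1_eq. unfold sl.
  pose proof (Rabs_pos (w1u - pu)). pose proof l_facts.
  pose proof (Rabs_pos (w2u - w1u)). pose proof (Rabs_pos (qu - w2u)). lra.
Qed.

Lemma del_facts : Rabs du0 <= 2 * d0 - Rabs (w1u - pu) /\ Rabs du1 <= 2 * d1 - Rabs (w2u - w1u) /\
  Rabs (Sgu - du0 - du1) <= 2 * (T - d0 - d1) - Rabs (qu - w2u) /\
  Rabs dv0 <= 2 * d0 - Rabs (w1v - pv) /\ Rabs dv1 <= 2 * d1 - Rabs (w2v - w1v) /\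
  Rabs (Sgv - dv0 - dv1) <= 2 * (T - d0 - d1) - Rabs (qv - w2v).
Proof.
  pose proof T_facts as [Hu [Hv HL]]. pose proof dur_facts as [Hsl [H0 [H1 [H2 E2]]]].
  rewrite d0_eq, d1_eq in *.
  pose proof l_facts.
  unfold du0, du1, dv0, dv1. rewrite !gdel_eq, tvu_eq, tvv_eq, d0_eq, d1_eq.
  assert (HA := del3 Sgu (2 * (l0 / 2 + sl) - Rabs (w1u - pu)) (2 * (l1 / 2 + sl) - Rabs (w2u - w1u))
     (2 * (T - (l0 / 2 + sl) - (l1 / 2 + sl)) - Rabs (qu - w2u))
     (2 * T - (Rabs (w1u - pu) + Rabs (w2u - w1u) + Rabs (qu - w2u)))
     ltac:(lra) ltac:(lra) ltac:(lra) ltac:(lra) ltac:(lra)).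
  assert (HB := del3 Sgv (2 * (l0 / 2 + sl) - Rabs (w1v - pv)) (2 * (l1 / 2 + sl) - Rabs (w2v - w1v))
     (2 * (T - (l0 / 2 + sl) - (l1 / 2 + sl)) - Rabs (qv - w2v))
     (2 * T - (Rabs (w1v - pv) + Rabs (w2v - w1v) + Rabs (qv - w2v)))
     ltac:(lra) ltac:(lra) ltac:(lra) ltac:(lra) ltac:(lra)).
  destruct HA as [A1 [A2 A3]]. destruct HB as [B1 [B2 B3]].
  repeat split; lra.
Qed.

Let z01 := (sch 3%nat, sch 4%nat). Let z11 := (sch 5%nat, sch 6%nat).
Let z02 := (sch 7%nat, sch 8%nat). Let z12 := (sch 9%nat, sch 10%nat).

Lemma robot_bounds :
  norm1 (psub z01 a0) <= sch 1%nat - 0 /\ norm1 (psub z02 z01) <= sch 2%nat - sch 1%nat /\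
  norm1 (psub b0 z02) <= sch 0%nat - sch 2%nat /\
  norm1 (psub z11 a1) <= sch 1%nat - 0 /\ norm1 (psub z12 z11) <= sch 2%nat - sch 1%nat /\
  norm1 (psub b1 z12) <= sch 0%nat - sch 2%nat.
Proof.
  pose proof del_facts as [U0 [U1 [U2 [V0 [V1 V2]]]]].
  unfold z01, z02, z11, z12. rewrite sch_z01, sch_z02, sch_z11, sch_z12, sch_0, sch_1, sch_2.
  destruct (uv0 S1u S1v w1u w1v) as [E1 F1]. destruct (uv0 S2u S2v w2u w2v) as [E2 F2].
  destruct (uv1 S1u S1v w1u w1v) as [E3 F3]. destruct (uv1 S2u S2v w2u w2v) as [E4 F4].
  destruct (half_bound _ _ _ U0) as [HU0a HU0b]. destruct (half_bound _ _ _ U1) as [HU1a HU1b].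
  destruct (half_bound _ _ _ U2) as [HU2a HU2b]. destruct (half_bound _ _ _ V0) as [HV0a HV0b].
  destruct (half_bound _ _ _ V1) as [HV1a HV1b]. destruct (half_bound _ _ _ V2) as [HV2a HV2b].
  unfold S2u, S2v, S1u, S1v in *.
  repeat split; apply norm1_le_uv;
  rewrite ?E1, ?F1, ?E2, ?F2, ?E3, ?F3, ?E4, ?F4.
  - replace ((Uq a0 + Uq a1 + du0 - w1u) / 2 - Uq a0) with ((du0 - (w1u - pu)) / 2) by (unfold pu; field). lra.
  - replace ((Vq a0 + Vq a1 + dv0 - w1v) / 2 - Vq a0) with ((dv0 - (w1v - pv)) / 2) by (unfold pv; field). lra.
  - replace ((Uq a0 + Uq a1 + du0 + du1 - w2u) / 2 - (Uq a0 + Uq a1 + du0 - w1u) / 2) with ((du1 - (w2u - w1u)) / 2) by field. lra.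
  - replace ((Vq a0 + Vq a1 + dv0 + dv1 - w2v) / 2 - (Vq a0 + Vq a1 + dv0 - w1v) / 2) with ((dv1 - (w2v - w1v)) / 2) by field. lra.
  - replace (Uq b0 - (Uq a0 + Uq a1 + du0 + du1 - w2u) / 2) with (((Sgu - du0 - du1) - (qu - w2u)) / 2) by (unfold Sgu, qu; field). lra.
  - replace (Vq b0 - (Vq a0 + Vq a1 + dv0 + dv1 - w2v) / 2) with (((Sgv - dv0 - dv1) - (qv - w2v)) / 2) by (unfold Sgv, qv; field). lra.
  - replace ((Uq a0 + Uq a1 + du0 + w1u) / 2 - Uq a1) with ((du0 + (w1u - pu)) / 2) by (unfold pu; field). lra.
  - replace ((Vq a0 + Vq a1 + dv0 + w1v) / 2 - Vq a1) with ((dv0 + (w1v - pv)) / 2) by (unfold pv; field). lra.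
  - replace ((Uq a0 + Uq a1 + du0 + du1 + w2u) / 2 - (Uq a0 + Uq a1 + du0 + w1u) / 2) with ((du1 + (w2u - w1u)) / 2) by field. lra.
  - replace ((Vq a0 + Vq a1 + dv0 + dv1 + w2v) / 2 - (Vq a0 + Vq a1 + dv0 + w1v) / 2) with ((dv1 + (w2v - w1v)) / 2) by field. lra.
  - replace (Uq b1 - (Uq a0 + Uq a1 + du0 + du1 + w2u) / 2) with (((Sgu - du0 - du1) + (qu - w2u)) / 2) by (unfold Sgu, qu; field). lra.
  - replace (Vq b1 - (Vq a0 + Vq a1 + dv0 + dv1 + w2v) / 2) with (((Sgv - dv0 - dv1) + (qv - w2v)) / 2) by (unfold Sgv, qv; field). lra.
Qed.

Lemma diff_uv : Uq z11 - Uq z01 = w1u /\ Vq z11 - Vq z01 = w1v /\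
  Uq z12 - Uq z02 = w2u /\ Vq z12 - Vq z02 = w2v.
Proof.
  unfold z01, z02, z11, z12. rewrite sch_z01, sch_z02, sch_z11, sch_z12.
  destruct (uv0 S1u S1v w1u w1v) as [E1 F1]. destruct (uv0 S2u S2v w2u w2v) as [E2 F2].
  destruct (uv1 S1u S1v w1u w1v) as [E3 F3]. destruct (uv1 S2u S2v w2u w2v) as [E4 F4].
  rewrite E1, F1, E2, F2, E3, F3, E4, F4. repeat split; field.
Qed.

Lemma construct : segok pu pv w1u w1v -> segok w1u w1v w2u w2v -> segok w2u w2v qu qv ->
  exists M, feasible_from_to 2 A B 0 (sch 0%nat) M /\ follows_pl 2 3 (taus sch) (pts A B sch) M.
Proof.
  intros S1 S2 S3.
  pose proof dur_facts as [_ [H0 [H1 [H2 _]]]].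
  assert (T0 : 0 <= sch 1%nat) by (rewrite sch_1; lra).
  assert (T1 : sch 1%nat <= sch 2%nat) by (rewrite sch_1, sch_2; lra).
  assert (T2 : sch 2%nat <= sch 0%nat) by (rewrite sch_0, sch_2; lra).
  pose proof robot_bounds as [N0 [N1 [N2 [N3 [N4 N5]]]]].
  pose proof diff_uv as [D1 [D2 [D3 D4]]].
  assert (P00 : pts A B sch 0 0 = a0) by (simpl; unfold a0; destruct (A 0%nat); reflexivity).
  assert (P10 : pts A B sch 1 0 = a1) by (simpl; unfold a1; destruct (A 1%nat); reflexivity).
  assert (P03 : pts A B sch 0 3 = b0) by (simpl; unfold b0; destruct (B 0%nat); reflexivity).
  assert (P13 : pts A B sch 1 3 = b1) by (simpl; unfold b1; destruct (B 1%nat); reflexivity).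
  assert (P01 : pts A B sch 0 1 = z01) by reflexivity.
  assert (P02 : pts A B sch 0 2 = z02) by reflexivity.
  assert (P11 : pts A B sch 1 1 = z11) by reflexivity.
  assert (P12 : pts A B sch 1 2 = z12) by reflexivity.
  set (M := fun r : nat => match r with
       | 0%nat => pl3 a0 z01 z02 b0 (sch 1%nat) (sch 2%nat) (sch 0%nat)
       | _ => pl3 a1 z11 z12 b1 (sch 1%nat) (sch 2%nat) (sch 0%nat) end).
  exists M.
  assert (TR0 : trajectory 0 (sch 0%nat) (M 0%nat)) by (apply pl_traj; auto).
  assert (TR1 : trajectory 0 (sch 0%nat) (M 1%nat)) by (apply pl_traj; auto).
  assert (SEP : forall t, 0 <= t <= sch 0%nat ->
     norminf (psub (M 1%nat t) (M 0%nat t)) >= 1 /\ norminf (psub (M 0%nat t) (M 1%nat t)) >= 1).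
  { intros t Ht. cbv beta iota delta [M].
    destruct (Rle_dec t (sch 1%nat)); [|destruct (Rle_dec t (sch 2%nat))].
    - rewrite !pl_in0 by (auto; lra). apply seg_sep; [lra|].
      rewrite D1, D2. exact S1.
    - rewrite !pl_in1 by (auto; lra). apply seg_sep; [lra|].
      rewrite D1, D2, D3, D4. exact S2.
    - rewrite !pl_in2 by (auto; lra). apply seg_sep; [lra|].
      rewrite D3, D4. exact S3. }
  split; [split; [split|]|].
  - split; [lra|]. intros i Hi. destruct i as [|[|i]]; [exact TR0 | exact TR1 | lia].
  - intros t Ht i j Hi Hj Hij. destruct (SEP t Ht) as [Sa Sb].
    destruct i as [|[|i]]; destruct j as [|[|j]]; try lia; auto.
  - intros i Hi. destruct i as [|[|i]]; [| |lia]; cbv beta iota delta [M]; split.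
    + apply pl_at0; auto.
    + apply pl_at3; auto.
    + apply pl_at0; auto.
    + apply pl_at3; auto.
  - split; [|split].
    + intros j Hj. destruct j as [|[|[|j]]]; cbv beta iota delta [taus]; lra || lia.
    + intros i j Hi Hj. destruct i as [|[|i]]; [| |lia]; destruct j as [|[|[|[|j]]]]; try lia; cbv beta iota delta [taus]; cbv beta iota delta [M];
      rewrite ?P00, ?P01, ?P02, ?P03, ?P10, ?P11, ?P12, ?P13;
      first [apply pl_at0 | apply pl_at1 | apply pl_at2 | apply pl_at3]; auto.
    + intros i j t Hi Hj Hlt Ht. destruct i as [|[|i]]; [| |lia]; destruct j as [|[|[|j]]]; try lia;
      cbv beta iota delta [taus] in *; cbv beta iota delta [M];
      rewrite ?P00, ?P01, ?P02, ?P03, ?P10, ?P11, ?P12, ?P13;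
      first [rewrite pl_in0 by (auto; lra) | rewrite pl_in1 by (auto; lra) | rewrite pl_in2 by (auto; lra)];
      reflexivity.
Qed.
End CONS.

Definition Tmain : rterm := gout Tops Tinp 0.
Definition Ttau (j : nat) : rterm :=
  match j with 0 => TCst 0 | 1 => gout Tops Tinp 1 | 2 => gout Tops Tinp 2 | _ => gout Tops Tinp 0 end.
Definition TPx (i j : nat) : rterm :=
  match i with
  | 0 => match j with 0 => TVar 0 | 1 => gout Tops Tinp 3 | 2 => gout Tops Tinp 7 | _ => TVar 4 end
  | _ => match j with 0 => TVar 2 | 1 => gout Tops Tinp 5 | 2 => gout Tops Tinp 9 | _ => TVar 6 end
  end.
Definition TPy (i j : nat) : rterm :=
  match i with
  | 0 => match j with 0 => TVar 1 | 1 => gout Tops Tinp 4 | 2 => gout Tops Tinp 8 | _ => TVar 5 end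
  | _ => match j with 0 => TVar 3 | 1 => gout Tops Tinp 6 | 2 => gout Tops Tinp 10 | _ => TVar 7 end
  end.

Lemma follows_pl_ext k K tau tau' P P' M : follows_pl k K tau P M ->
  (forall j, tau j = tau' j) -> (forall i j, P i j = P' i j) -> follows_pl k K tau' P' M.
Proof.
  intros [H1 [H2 H3]] Et EP. split; [|split].
  - intros j Hj. rewrite <- !Et. auto.
  - intros i j Hi Hj. rewrite <- EP. rewrite <- Et. auto.
  - intros i j t Hi Hj Hlt Ht. rewrite <- !EP, <- !Et. rewrite <- !Et in Hlt, Ht. auto.
Qed.

Lemma free_of_config p q : norminf (psub p q) >= 1 -> freeR (Uq q - Uq p) (Vq q - Vq p).
Proof. destruct p, q. unfold norminf, psub, freeR, Uq, Vq; simpl. intros. elimR; lra. Qed.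
Lemma uq_lip p q : Rabs (Uq p - Uq q) <= norm1 (psub p q) /\ Rabs (Vq p - Vq q) <= norm1 (psub p q).
Proof. destruct p, q. unfold norm1, psub, Uq, Vq; simpl. split; elimR; lra. Qed.

Section MAIN.
Variables A B : nat -> pt.
Let env := input2 A B.
Let pu := Uq (A 1%nat) - Uq (A 0%nat). Let pv := Vq (A 1%nat) - Vq (A 0%nat).
Let qu := Uq (B 1%nat) - Uq (B 0%nat). Let qv := Vq (B 1%nat) - Vq (B 0%nat).
Let Sgu := (Uq (B 0%nat) + Uq (B 1%nat)) - (Uq (A 0%nat) + Uq (A 1%nat)).
Let Sgv := (Vq (B 0%nat) + Vq (B 1%nat)) - (Vq (A 0%nat) + Vq (A 1%nat)).

Lemma gout_eq : exists w1u w1v w2u w2v,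
  gW Rops pu pv qu qv (Rabs Sgu) (Rabs Sgv) = (w1u, w1v, w2u, w2v) /\
  forall n, gout Rops (Rinp env) n =
    gsched Rops pu pv w1u w1v w2u w2v qu qv Sgu Sgv (Uq (A 0%nat) + Uq (A 1%nat)) (Vq (A 0%nat) + Vq (A 1%nat)) n.
Proof.
  destruct (gW Rops pu pv qu qv (Rabs Sgu) (Rabs Sgv)) as [[[w1u w1v] w2u] w2v] eqn:HW.
  exists w1u, w1v, w2u, w2v. split; auto. intros n. unfold gout.
  rewrite !gabsR.
  change (ipu Rops (Rinp env)) with pu. change (ipv Rops (Rinp env)) with pv.
  change (iqu Rops (Rinp env)) with qu. change (iqv Rops (Rinp env)) with qv.
  change (iSu Rops (Rinp env)) with Sgu. change (iSv Rops (Rinp env)) with Sgv.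
  rewrite HW. reflexivity.
Qed.
End MAIN.

Theorem theorem3p3 :
  exists (T : rterm) (K : nat) (tau : nat -> rterm)
         (Px Py : nat -> nat -> rterm),
  forall A B : nat -> pt,
    is_config 2 A -> is_config 2 B ->
    let env := input2 A B in
    let tT := reval env T in
    (exists M : nat -> R -> pt,
        feasible_from_to 2 A B 0 tT M /\
        reval env (tau 0%nat) = 0 /\ reval env (tau K) = tT /\
        follows_pl 2 K (fun j => reval env (tau j))
          (fun i j => (reval env (Px i j), reval env (Py i j))) M) /\
    (forall (t0 t1 : R) (M : nat -> R -> pt),
        feasible_from_to 2 A B t0 t1 M -> tT <= t1 - t0).
Proof.
  exists Tmain, 3%nat, Ttau, TPx, TPy.
  intros A B HA HB env tT.
  assert (ET : forall n, reval env (gout Tops Tinp n) = gout Rops (Rinp env) n) by (intros; apply reval_out).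
  destruct (gout_eq A B) as [w1u [w1v [w2u [w2v [HW EG]]]]].
  fold env in EG.
  assert (FA : freeR (Uq (A 1%nat) - Uq (A 0%nat)) (Vq (A 1%nat) - Vq (A 0%nat)))
    by (apply free_of_config; apply HA; lia).
  assert (FB : freeR (Uq (B 1%nat) - Uq (B 0%nat)) (Vq (B 1%nat) - Vq (B 0%nat)))
    by (apply free_of_config; apply HB; lia).
  pose proof (W_ok _ _ _ _ (Rabs ((Uq (B 0%nat) + Uq (B 1%nat)) - (Uq (A 0%nat) + Uq (A 1%nat))))
                (Rabs ((Vq (B 0%nat) + Vq (B 1%nat)) - (Vq (A 0%nat) + Vq (A 1%nat)))) FA FB) as WO.
  rewrite HW in WO. destruct WO as [S1 [S2 S3]].
  assert (EtT : tT = gout Rops (Rinp env) 0) by (unfold tT, Tmain; apply ET).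
  split.
  - destruct (construct A B w1u w1v w2u w2v S1 S2 S3) as [M [HF HP]].
    exists M. rewrite EtT, EG. split; [exact HF|]. split; [reflexivity|]. split.
    + simpl Ttau. rewrite ET, EG. reflexivity.
    + eapply follows_pl_ext; [exact HP| |].
      * intros j. destruct j as [|[|[|j]]]; simpl Ttau; rewrite ?ET, ?EG; reflexivity.
      * intros i j. destruct i as [|[|i]]; destruct j as [|[|[|j]]]; simpl TPx; simpl TPy;
        rewrite ?ET, ?EG; reflexivity.
  - intros t0 t1 M [[[Hle HT] HC] HE].
    set (U0 := fun t => Uq (M 0%nat t)). set (U1 := fun t => Uq (M 1%nat t)).
    set (V0 := fun t => Vq (M 0%nat t)). set (V1 := fun t => Vq (M 1%nat t)).
    assert (LB : LBH U0 U1 V0 V1 t0 t1).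
    { destruct (HT 0%nat ltac:(lia)) as [_ [L0 _]]. destruct (HT 1%nat ltac:(lia)) as [_ [L1 _]].
      split; auto.
      - intros s t Hs Ht. unfold U0. rewrite Rmult_1_l. eapply Rle_trans; [apply uq_lip| apply L0]; auto.
      - intros s t Hs Ht. unfold U1. rewrite Rmult_1_l. eapply Rle_trans; [apply uq_lip| apply L1]; auto.
      - intros s t Hs Ht. unfold V0. rewrite Rmult_1_l. eapply Rle_trans; [apply uq_lip| apply L0]; auto.
      - intros s t Hs Ht. unfold V1. rewrite Rmult_1_l. eapply Rle_trans; [apply uq_lip| apply L1]; auto.
      - intros t Ht. pose proof (HC t Ht 0%nat 1%nat ltac:(lia) ltac:(lia) ltac:(lia)) as C.
        apply free_of_config in C. exact C. }
    pose proof (lb_gen _ _ _ _ _ _ LB) as G.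
    destruct (HE 0%nat ltac:(lia)) as [E00 E01]. destruct (HE 1%nat ltac:(lia)) as [E10 E11].
    unfold dU, sS, U0, U1, V0, V1 in G. cbv beta in G.
    rewrite E00, E01, E10, E11 in G.
    rewrite HW in G.
    rewrite EtT, EG. unfold gsched. cbv zeta. rewrite !gabsR, gG_R. exact G.
Qed.
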